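(* Let $(W,\cdot,\iota)$ be any constraint domain. Let $\Gamma$ be a set and $\Delta$ a multiset of HyLL judgements, and $C@w$ a judgement, such that $\Gamma;\Delta\Rightarrow C@w$ is derivable in the (unfocused) HyLL sequent calculus. Let $\Gamma^-$ be obtained by replacing each $A@u\in\Gamma$ by $A^-@u$ for some negative polarization $A^-$ of $A$, let $C^-$ be a negative polarization of $C$, and let $\Delta^+$ be obtained by replacing each $A@u\in\Delta$ by $A^+@u$ for some positive polarization $A^+$ of $A$. Write $!\Gamma^-$ for the collection of judgements $!N@u$ with $N@u\in\Gamma^-$. Then the active sequent $\cdot;\cdot;\ !\Gamma^-,\Delta^+\Rightarrow C^-@w;\cdot$ is derivable in the focused HyLL calculus.
   Context: HyLL: worlds are elements of a monoid $(W,\cdot,\iota)$ (world expressions built from world variables and $\cdot$, up to monoid equations); terms are first-order; world and term variables never mix; $\alpha$ ranges over variables of either kind, $\tau$ over terms/worlds, $[\tau/\alpha]$ is capture-avoiding substitution. Unpolarized HyLL propositions: $A ::= a\,\vec t\mid A\otimes B\mid\mathbf1\mid A\multimap B\mid A\&B\mid\top\mid A\oplus B\mid\mathbf0\mid !A\mid\forall\alpha.A\mid\exists\alpha.A\mid(A\ \mathsf{at}\ w)\mid\downarrow u.A$; the unfocused HyLL sequent calculus has sequents $\Gamma;\Delta\Rightarrow C@w$ ($\Gamma$ a set, $\Delta$ a multiset of judgements $A@u$) with the standard intuitionistic linear rules (init on atoms at the same world, copy from $\Gamma$ to $\Delta$, left/right rules for each connective, with left rules acting on a hypothesis $A@u$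 at its own world $u$ and right rules keeping the succedent world $w$, and $!$R requiring empty $\Delta$), plus $\mathsf{at}$R: from $\Gamma;\Delta\Rightarrow A@u$ infer $\Gamma;\Delta\Rightarrow(A\ \mathsf{at}\ u)@v$; $\mathsf{at}$L: from $\Gamma;\Delta,A@u\Rightarrow C@w$ infer $\Gamma;\Delta,(A\ \mathsf{at}\ u)@v\Rightarrow C@w$; $\downarrow$R: from $\Gamma;\Delta\Rightarrow[w/u]A@w$ infer $\Gamma;\Delta\Rightarrow\downarrow u.A@w$; $\downarrow$L: from $\Gamma;\Delta,[v/u]A@v\Rightarrow C@w$ infer $\Gamma;\Delta,\downarrow u.A@v\Rightarrow C@w$. Polarized syntax: atomic predicates are each assigned a polarity, positive atoms $p\,\vec t$ and negative atoms $n\,\vec t$. Positive $P,Q ::= p\,\vec t\mid P\otimes Q\mid\mathbf1\mid P\oplus Q\mid\mathbf0\mid !N\mid\exists\alpha.P\mid\downarrow u.P\mid(P\ \mathsf{at}\ w)\mid\mathsf{pos}\,N$; negative $N,M ::= n\,\vec t\mid N\&M\mid\top\mid P\multimap N\mid\forall\alpha.N\mid\downarrow u.N\mid(N\ \mathsf{at}\ w)\mid\mathsf{neg}\,P$. A positive (resp. negative) polarization of $A$ is a positive (resp. negative) polarized proposition that becomes $A$ when all shifts $\mathsf{pos},\mathsf{neg}$ are deleted. Focused sequents: active $\Gamma;\Delta;\Omega\Rightarrow\cdot;P@w$ and $\Gamma;\Delta;\Omega\Rightarrow N@w;\cdot$; left-focused $\Gamma;\Delta;[N@u]\Rightarrow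 P@w$; right-focused $\Gamma;\Delta\Rightarrow[P@w]$. $\Gamma$ (set), $\Delta$ (multiset) contain negative judgements; $\Omega$ (multiset) positive judgements. Below $\mathcal L$ denotes $\Gamma;\Delta;\Omega$ and $\mathcal R$ denotes either $\cdot;Q@w$ or $N@w;\cdot$; ''$X\Longrightarrow Y$'' means premises $X$ give conclusion $Y$. Focused rules: li: $\Gamma;\cdot;[n\,\vec t@w]\Rightarrow\mathsf{pos}(n\,\vec t)@w$. $\mathsf{neg}$L: $\Gamma;\Delta;P@u\Rightarrow\cdot;Q@w\Longrightarrow\Gamma;\Delta;[\mathsf{neg}P@u]\Rightarrow Q@w$. $\mathsf{pos}$R: $\Gamma;\Delta;\cdot\Rightarrow N@w;\cdot\Longrightarrow\Gamma;\Delta\Rightarrow[\mathsf{pos}N@w]$. $\&$L$_i$: $\Gamma;\Delta;[N_i@u]\Rightarrow Q@w\Longrightarrow\Gamma;\Delta;[N_1\&N_2@u]\Rightarrow Q@w$. $\multimap$L: $\Gamma;\Delta\Rightarrow[P@u]$ and $\Gamma;\Xi;[N@u]\Rightarrow Q@w\Longrightarrow\Gamma;\Delta,\Xi;[P\multimap N@u]\Rightarrow Q@w$. $\forall$L: $\Gamma;\Delta;[[\tau/\alpha]N@u]\Rightarrow Q@w\Longrightarrow\Gamma;\Delta;[\forall\alpha.N@u]\Rightarrow Q@w$. $\downarrow$LF: $\Gamma;\Delta;[[v/u]N@v]\Rightarrow Q@w\Longrightarrow\Gamma;\Delta;[\downarrow u.N@v]\Rightarrow Q@w$. $\mathsf{at}$LF: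 $\Gamma;\Delta;[N@u]\Rightarrow Q@w\Longrightarrow\Gamma;\Delta;[(N\ \mathsf{at}\ u)@v]\Rightarrow Q@w$. ri: $\Gamma;\mathsf{neg}(p\,\vec t)@w\Rightarrow[p\,\vec t@w]$. $\otimes$R: $\Gamma;\Delta\Rightarrow[P@w]$ and $\Gamma;\Xi\Rightarrow[Q@w]\Longrightarrow\Gamma;\Delta,\Xi\Rightarrow[P\otimes Q@w]$. $\oplus$R$_i$: $\Gamma;\Delta\Rightarrow[P_i@w]\Longrightarrow\Gamma;\Delta\Rightarrow[P_1\oplus P_2@w]$. $\exists$R: $\Gamma;\Delta\Rightarrow[[\tau/\alpha]P@w]\Longrightarrow\Gamma;\Delta\Rightarrow[\exists\alpha.P@w]$. $!$R: $\Gamma;\cdot;\cdot\Rightarrow N@w;\cdot\Longrightarrow\Gamma;\cdot\Rightarrow[!N@w]$. $\downarrow$RF: $\Gamma;\Delta\Rightarrow[[w/u]P@w]\Longrightarrow\Gamma;\Delta\Rightarrow[\downarrow u.P@w]$. $\mathsf{at}$RF: $\Gamma;\Delta\Rightarrow[P@u]\Longrightarrow\Gamma;\Delta\Rightarrow[(P\ \mathsf{at}\ u)@w]$. $\mathbf1$R: $\Gamma;\cdot\Rightarrow[\mathbf1@w]$. Active rules: $\otimes$L: $\mathcal L,P@u,Q@u\Rightarrow\mathcal R\Longrightarrow\mathcal L,P\otimes Q@u\Rightarrow\mathcal R$. $\mathbf1$L: $\mathcal L\Rightarrow\mathcal R\Longrightarrow\mathcal L,\mathbf1@u\Rightarrow\mathcal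 R$. $\oplus$L: $\mathcal L,P@u\Rightarrow\mathcal R$ and $\mathcal L,Q@u\Rightarrow\mathcal R\Longrightarrow\mathcal L,P\oplus Q@u\Rightarrow\mathcal R$. $\downarrow$LA: $\mathcal L,[v/u]P@v\Rightarrow\mathcal R\Longrightarrow\mathcal L,\downarrow u.P@v\Rightarrow\mathcal R$. $\mathsf{at}$LA: $\mathcal L,P@u\Rightarrow\mathcal R\Longrightarrow\mathcal L,(P\ \mathsf{at}\ u)@v\Rightarrow\mathcal R$. $\exists$L: $\mathcal L,P@u\Rightarrow\mathcal R\Longrightarrow\mathcal L,\exists\alpha.P@u\Rightarrow\mathcal R$ ($\alpha$ fresh). $!$L: $\Gamma,N@u;\Delta;\Omega\Rightarrow\mathcal R\Longrightarrow\Gamma;\Delta;\Omega,!N@u\Rightarrow\mathcal R$. $\mathsf{pos}$L: $\Gamma;\Delta,N@w;\Omega\Rightarrow\mathcal R\Longrightarrow\Gamma;\Delta;\Omega,\mathsf{pos}N@w\Rightarrow\mathcal R$. lp: $\Gamma;\Delta,\mathsf{neg}(p\,\vec t)@w;\Omega\Rightarrow\mathcal R\Longrightarrow\Gamma;\Delta;\Omega,p\,\vec t@w\Rightarrow\mathcal R$. $\mathbf0$L: $\mathcal L,\mathbf0@u\Rightarrow\mathcal R$. $\&$R: $\mathcal L\Rightarrow M@w;\cdot$ and $\mathcal L\Rightarrow N@w;\cdot\Longrightarrow\mathcal L\Rightarrow M\&N@w;\cdot$. $\top$R: $\mathcal L\Rightarrow\top@w;\cdot$. $\multimap$R: $\mathcal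 L,P@w\Rightarrow N@w;\cdot\Longrightarrow\mathcal L\Rightarrow P\multimap N@w;\cdot$. $\downarrow$RA: $\mathcal L\Rightarrow[w/u]N@w;\cdot\Longrightarrow\mathcal L\Rightarrow\downarrow u.N@w;\cdot$. $\mathsf{at}$RA: $\mathcal L\Rightarrow N@u;\cdot\Longrightarrow\mathcal L\Rightarrow(N\ \mathsf{at}\ u)@w;\cdot$. $\forall$R: $\mathcal L\Rightarrow N@u;\cdot\Longrightarrow\mathcal L\Rightarrow\forall\alpha.N@u;\cdot$ ($\alpha$ fresh). $\mathsf{neg}$R: $\mathcal L\Rightarrow\cdot;P@w\Longrightarrow\mathcal L\Rightarrow\mathsf{neg}P@w;\cdot$. rp: $\mathcal L\Rightarrow\cdot;\mathsf{pos}(n\,\vec t)@w\Longrightarrow\mathcal L\Rightarrow n\,\vec t@w;\cdot$. Decisions: lf: $\Gamma;\Delta;[N@u]\Rightarrow Q@w\Longrightarrow\Gamma;\Delta,N@u;\cdot\Rightarrow\cdot;Q@w$, provided $N$ is not of the form $\mathsf{neg}(p\,\vec t)$. cplf: $\Gamma,N@u;\Delta;[N@u]\Rightarrow Q@w\Longrightarrow\Gamma,N@u;\Delta;\cdot\Rightarrow\cdot;Q@w$. rf: $\Gamma;\Delta\Rightarrow[P@w]\Longrightarrow\Gamma;\Delta;\cdot\Rightarrow\cdot;P@w$, provided $P$ is not of the form $\mathsf{pos}(n\,\vec t)$. *)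

(* Defs.v *)
(* HyLL: unfocused and focused sequent calculi.
   Variables are de Bruijn indices; term variables and world variables live
   in two separate index spaces (they never mix). *)
From Stdlib Require Import List Permutation.
Import ListNotations.
Set Implicit Arguments.
Unset Strict Implicit.

Record constraint_domain := {
  wcar : Type;
  wop : wcar -> wcar -> wcar;
  wunit : wcar;
  wop_assoc : forall a b c, wop (wop a b) c = wop a (wop b c);
  wop_unitl : forall a, wop wunit a = a;
  wop_unitr : forall a, wop a wunit = a }.

Definition scons (A : Type) (a : A) (f : nat -> A) (n : nat) : A :=
  match n with 0 => a | S m => f m end.

Section Terms.
Variable Fn : Type.

Inductive term : Type :=
| TVar (n : nat)
| TApp (f : Fn) (ts : list term).

Fixpoint tsub (s : nat -> term) (t : term) : term :=
  match t with
  | TVar n => s n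
  | TApp f ts => TApp f (map (tsub s) ts)
  end.

Definition up_t (s : nat -> term) : nat -> term :=
  scons (TVar 0) (fun m => tsub (fun k => TVar (S k)) (s m)).
End Terms.
Arguments TVar {Fn} n.
Arguments TApp {Fn} f ts.

(* World expressions: world variables, constants of W, iota, and dot,
   considered up to the monoid equations (weq). *)
Section Worlds.
Variable CD : constraint_domain.

Inductive wexp : Type :=
| WVar (n : nat)
| WConst (c : wcar CD)
| WIota
| WDot (u v : wexp).

Fixpoint wsub (s : nat -> wexp) (u : wexp) : wexp :=
  match u with
  | WVar n => s n
  | WConst c => WConst c
  | WIota => WIota
  | WDot u v => WDot (wsub s u) (wsub s v)
  end.

Definition up_w (s : nat -> wexp) : nat -> wexp :=
  scons (WVar 0) (fun m => wsub (fun k => WVar (S k)) (s m)).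

Definition wshift (u : wexp) : wexp := wsub (fun k => WVar (S k)) u.

Inductive weq : wexp -> wexp -> Prop :=
| weq_refl u : weq u u
| weq_sym u v : weq u v -> weq v u
| weq_trans u v x : weq u v -> weq v x -> weq u x
| weq_dot u u' v v' : weq u u' -> weq v v' -> weq (WDot u v) (WDot u' v')
| weq_assoc u v x : weq (WDot (WDot u v) x) (WDot u (WDot v x))
| weq_unitl u : weq (WDot WIota u) u
| weq_unitr u : weq (WDot u WIota) u
| weq_const a b : weq (WDot (WConst a) (WConst b)) (WConst (wop a b))
| weq_iota : weq WIota (WConst (wunit CD)).
End Worlds.
Arguments WVar {CD} n.
Arguments WConst {CD} c.
Arguments WIota {CD}.
Arguments WDot {CD} u v.

(* Unpolarized HyLL propositions.  AllT/ExT bind a term variable,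
   AllW/ExW/Down bind a world variable (index 0). *)
Section Props.
Variables (CD : constraint_domain) (Fn Pr : Type).

Inductive prop : Type :=
| Atom (a : Pr) (ts : list (term Fn))
| Tensor (A B : prop)
| One
| Lolli (A B : prop)
| With (A B : prop)
| Top
| Plus (A B : prop)
| Zero
| Bang (A : prop)
| AllT (A : prop)
| AllW (A : prop)
| ExT (A : prop)
| ExW (A : prop)
| At (A : prop) (w : wexp CD)
| Down (A : prop).

Fixpoint psub (st : nat -> term Fn) (sw : nat -> wexp CD) (A : prop) : prop :=
  match A with
  | Atom a ts => Atom a (map (tsub st) ts)
  | Tensor A B => Tensor (psub st sw A) (psub st sw B)
  | One => One
  | Lolli A B => Lolli (psub st sw A) (psub st sw B)
  | With A B => With (psub st sw A) (psub st sw B)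
  | Top => Top
  | Plus A B => Plus (psub st sw A) (psub st sw B)
  | Zero => Zero
  | Bang A => Bang (psub st sw A)
  | AllT A => AllT (psub (up_t st) sw A)
  | AllW A => AllW (psub st (up_w sw) A)
  | ExT A => ExT (psub (up_t st) sw A)
  | ExW A => ExW (psub st (up_w sw) A)
  | At A u => At (psub st sw A) (wsub sw u)
  | Down A => Down (psub st (up_w sw) A)
  end.

Definition tinst (t : term Fn) (A : prop) : prop := psub (scons t (@TVar Fn)) (@WVar CD) A.
Definition winst (u : wexp CD) (A : prop) : prop := psub (@TVar Fn) (scons u (@WVar CD)) A.
Definition tshift (A : prop) : prop := psub (fun k => TVar (S k)) (@WVar CD) A.
Definition wshiftp (A : prop) : prop := psub (@TVar Fn) (fun k => WVar (S k)) A.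

Definition hyp : Type := (prop * wexp CD)%type.
Definition tshift_ctx (G : list hyp) : list hyp :=
  map (fun h => (tshift (fst h), snd h)) G.
Definition wshift_ctx (G : list hyp) : list hyp :=
  map (fun h => (wshiftp (fst h), wshift (snd h))) G.

(* Unfocused HyLL sequent calculus  G ; D ==> C @ w.
   G (unrestricted, a set) and D (linear, a multiset) are lists; the
   multiset reading of D is given by the exchange rule u_perm. *)
Inductive useq : list hyp -> list hyp -> prop -> wexp CD -> Prop :=
| u_perm G D D' C w : Permutation D D' -> useq G D C w -> useq G D' C w
| u_init G a ts u w : weq u w -> useq G [(Atom a ts, u)] (Atom a ts) w
| u_copy G D A u C w : In (A, u) G -> useq G ((A, u) :: D) C w -> useq G D C w
| u_tensorR G D1 D2 A B w :
    useq G D1 A w -> useq G D2 B w -> useq G (D1 ++ D2) (Tensor A B) w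
| u_tensorL G D A B u C w :
    useq G ((A, u) :: (B, u) :: D) C w -> useq G ((Tensor A B, u) :: D) C w
| u_oneR G w : useq G [] One w
| u_oneL G D u C w : useq G D C w -> useq G ((One, u) :: D) C w
| u_lolliR G D A B w : useq G ((A, w) :: D) B w -> useq G D (Lolli A B) w
| u_lolliL G D1 D2 A B u C w :
    useq G D1 A u -> useq G ((B, u) :: D2) C w ->
    useq G ((Lolli A B, u) :: D1 ++ D2) C w
| u_withR G D A B w : useq G D A w -> useq G D B w -> useq G D (With A B) w
| u_withL1 G D A B u C w :
    useq G ((A, u) :: D) C w -> useq G ((With A B, u) :: D) C w
| u_withL2 G D A B u C w :
    useq G ((B, u) :: D) C w -> useq G ((With A B, u) :: D) C w
| u_topR G D w : useq G D Top w
| u_plusR1 G D A B w : useq G D A w -> useq G D (Plus A B) w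
| u_plusR2 G D A B w : useq G D B w -> useq G D (Plus A B) w
| u_plusL G D A B u C w :
    useq G ((A, u) :: D) C w -> useq G ((B, u) :: D) C w ->
    useq G ((Plus A B, u) :: D) C w
| u_zeroL G D u C w : useq G ((Zero, u) :: D) C w
| u_bangR G A w : useq G [] A w -> useq G [] (Bang A) w
| u_bangL G D A u C w : useq ((A, u) :: G) D C w -> useq G ((Bang A, u) :: D) C w
| u_allTR G D A w :
    useq (tshift_ctx G) (tshift_ctx D) A w -> useq G D (AllT A) w
| u_allWR G D A w :
    useq (wshift_ctx G) (wshift_ctx D) A (wshift w) -> useq G D (AllW A) w
| u_allTL G D A t u C w :
    useq G ((tinst t A, u) :: D) C w -> useq G ((AllT A, u) :: D) C w
| u_allWL G D A v u C w :
    useq G ((winst v A, u) :: D) C w -> useq G ((AllW A, u) :: D) C w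
| u_exTR G D A t w : useq G D (tinst t A) w -> useq G D (ExT A) w
| u_exWR G D A v w : useq G D (winst v A) w -> useq G D (ExW A) w
| u_exTL G D A u C w :
    useq (tshift_ctx G) ((A, u) :: tshift_ctx D) (tshift C) w ->
    useq G ((ExT A, u) :: D) C w
| u_exWL G D A u C w :
    useq (wshift_ctx G) ((A, wshift u) :: wshift_ctx D) (wshiftp C) (wshift w) ->
    useq G ((ExW A, u) :: D) C w
| u_atR G D A u v : useq G D A u -> useq G D (At A u) v
| u_atL G D A u v C w :
    useq G ((A, u) :: D) C w -> useq G ((At A u, v) :: D) C w
| u_downR G D A w : useq G D (winst w A) w -> useq G D (Down A) w
| u_downL G D A v C w :
    useq G ((winst v A, v) :: D) C w -> useq G ((Down A, v) :: D) C w.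
End Props.
Arguments useq {CD Fn Pr}.
Arguments Atom {CD Fn Pr}.
Arguments Tensor {CD Fn Pr}.
Arguments One {CD Fn Pr}.
Arguments Lolli {CD Fn Pr}.
Arguments With {CD Fn Pr}.
Arguments Top {CD Fn Pr}.
Arguments Plus {CD Fn Pr}.
Arguments Zero {CD Fn Pr}.
Arguments Bang {CD Fn Pr}.
Arguments AllT {CD Fn Pr}.
Arguments AllW {CD Fn Pr}.
Arguments ExT {CD Fn Pr}.
Arguments ExW {CD Fn Pr}.
Arguments At {CD Fn Pr}.
Arguments Down {CD Fn Pr}.

Section PolarizedSyntax.
Variables (CD : constraint_domain) (Fn Pr : Type).

Inductive pprop : Type :=
| PAtom (p : Pr) (ts : list (term Fn))
| PTensor (P Q : pprop)
| POne
| PPlus (P Q : pprop)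
| PZero
| PBang (N : nprop)
| PExT (P : pprop)
| PExW (P : pprop)
| PDown (P : pprop)
| PAt (P : pprop) (w : wexp CD)
| PPos (N : nprop)
with nprop : Type :=
| NAtom (n : Pr) (ts : list (term Fn))
| NWith (N M : nprop)
| NTop
| NLolli (P : pprop) (N : nprop)
| NAllT (N : nprop)
| NAllW (N : nprop)
| NDown (N : nprop)
| NAt (N : nprop) (w : wexp CD)
| NNeg (P : pprop).

End PolarizedSyntax.
Arguments PAtom {CD Fn Pr}.
Arguments PTensor {CD Fn Pr}.
Arguments POne {CD Fn Pr}.
Arguments PPlus {CD Fn Pr}.
Arguments PZero {CD Fn Pr}.
Arguments PBang {CD Fn Pr}.
Arguments PExT {CD Fn Pr}.
Arguments PExW {CD Fn Pr}.
Arguments PDown {CD Fn Pr}.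
Arguments PAt {CD Fn Pr}.
Arguments PPos {CD Fn Pr}.
Arguments NAtom {CD Fn Pr}.
Arguments NWith {CD Fn Pr}.
Arguments NTop {CD Fn Pr}.
Arguments NLolli {CD Fn Pr}.
Arguments NAllT {CD Fn Pr}.
Arguments NAllW {CD Fn Pr}.
Arguments NDown {CD Fn Pr}.
Arguments NAt {CD Fn Pr}.
Arguments NNeg {CD Fn Pr}.

Section Polarized.
Variables (CD : constraint_domain) (Fn Pr : Type).
Local Notation pprop := (pprop CD Fn Pr).
Local Notation nprop := (nprop CD Fn Pr).

Fixpoint ppsub (st : nat -> term Fn) (sw : nat -> wexp CD) (P : pprop) : pprop :=
  match P with
  | PAtom p ts => PAtom p (map (tsub st) ts)
  | PTensor P Q => PTensor (ppsub st sw P) (ppsub st sw Q)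
  | POne => POne
  | PPlus P Q => PPlus (ppsub st sw P) (ppsub st sw Q)
  | PZero => PZero
  | PBang N => PBang (npsub st sw N)
  | PExT P => PExT (ppsub (up_t st) sw P)
  | PExW P => PExW (ppsub st (up_w sw) P)
  | PDown P => PDown (ppsub st (up_w sw) P)
  | PAt P u => PAt (ppsub st sw P) (wsub sw u)
  | PPos N => PPos (npsub st sw N)
  end
with npsub (st : nat -> term Fn) (sw : nat -> wexp CD) (N : nprop) : nprop :=
  match N with
  | NAtom n ts => NAtom n (map (tsub st) ts)
  | NWith N M => NWith (npsub st sw N) (npsub st sw M)
  | NTop => NTop
  | NLolli P N => NLolli (ppsub st sw P) (npsub st sw N)
  | NAllT N => NAllT (npsub (up_t st) sw N)
  | NAllW N => NAllW (npsub st (up_w sw) N)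
  | NDown N => NDown (npsub st (up_w sw) N)
  | NAt N u => NAt (npsub st sw N) (wsub sw u)
  | NNeg P => NNeg (ppsub st sw P)
  end.

Definition ptinst (t : term Fn) (P : pprop) : pprop := ppsub (scons t (@TVar Fn)) (@WVar CD) P.
Definition pwinst (u : wexp CD) (P : pprop) : pprop := ppsub (@TVar Fn) (scons u (@WVar CD)) P.
Definition ntinst (t : term Fn) (N : nprop) : nprop := npsub (scons t (@TVar Fn)) (@WVar CD) N.
Definition nwinst (u : wexp CD) (N : nprop) : nprop := npsub (@TVar Fn) (scons u (@WVar CD)) N.
Definition ptshift (P : pprop) : pprop := ppsub (fun k => TVar (S k)) (@WVar CD) P.
Definition pwshift (P : pprop) : pprop := ppsub (@TVar Fn) (fun k => WVar (S k)) P.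
Definition ntshift (N : nprop) : nprop := npsub (fun k => TVar (S k)) (@WVar CD) N.
Definition nwshift (N : nprop) : nprop := npsub (@TVar Fn) (fun k => WVar (S k)) N.

Fixpoint perase (P : pprop) : prop CD Fn Pr :=
  match P with
  | PAtom p ts => Atom p ts
  | PTensor P Q => Tensor (perase P) (perase Q)
  | POne => One
  | PPlus P Q => Plus (perase P) (perase Q)
  | PZero => Zero
  | PBang N => Bang (nerase N)
  | PExT P => ExT (perase P)
  | PExW P => ExW (perase P)
  | PDown P => Down (perase P)
  | PAt P u => At (perase P) u
  | PPos N => nerase N
  end
with nerase (N : nprop) : prop CD Fn Pr :=
  match N with
  | NAtom n ts => Atom n ts
  | NWith N M => With (nerase N) (nerase M)
  | NTop => Top
  | NLolli P N => Lolli (perase P) (nerase N)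
  | NAllT N => AllT (nerase N)
  | NAllW N => AllW (nerase N)
  | NDown N => Down (nerase N)
  | NAt N u => At (nerase N) u
  | NNeg P => perase P
  end.

(* Polarity assignment to atomic predicates: true = positive. *)
Variable pol : Pr -> bool.

(* the grammar's requirement that positive (resp. negative) atoms occur
   only as p t (resp. n t) *)
Fixpoint pwf (P : pprop) : Prop :=
  match P with
  | PAtom p _ => pol p = true
  | PTensor P Q => pwf P /\ pwf Q
  | POne => True
  | PPlus P Q => pwf P /\ pwf Q
  | PZero => True
  | PBang N => nwf N
  | PExT P => pwf P
  | PExW P => pwf P
  | PDown P => pwf P
  | PAt P _ => pwf P
  | PPos N => nwf N
  end
with nwf (N : nprop) : Prop :=
  match N with
  | NAtom n _ => pol n = false
  | NWith N M => nwf N /\ nwf M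
  | NTop => True
  | NLolli P N => pwf P /\ nwf N
  | NAllT N => nwf N
  | NAllW N => nwf N
  | NDown N => nwf N
  | NAt N _ => nwf N
  | NNeg P => pwf P
  end.

Definition pos_polarization (A : prop CD Fn Pr) (P : pprop) : Prop :=
  pwf P /\ perase P = A.
Definition neg_polarization (A : prop CD Fn Pr) (N : nprop) : Prop :=
  nwf N /\ nerase N = A.

Definition nhyp : Type := (nprop * wexp CD)%type.
Definition phyp : Type := (pprop * wexp CD)%type.

(* right-hand side of an active sequent:  . ; P @ w   or   N @ w ; . *)
Inductive rhs : Type :=
| RP (P : pprop) (w : wexp CD)
| RN (N : nprop) (w : wexp CD).

Definition ntshift_ctx (G : list nhyp) : list nhyp :=
  map (fun h => (ntshift (fst h), snd h)) G.
Definition nwshift_ctx (G : list nhyp) : list nhyp :=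
  map (fun h => (nwshift (fst h), wshift (snd h))) G.
Definition ptshift_ctx (O : list phyp) : list phyp :=
  map (fun h => (ptshift (fst h), snd h)) O.
Definition pwshift_ctx (O : list phyp) : list phyp :=
  map (fun h => (pwshift (fst h), wshift (snd h))) O.
Definition rhs_tshift (R : rhs) : rhs :=
  match R with RP P w => RP (ptshift P) w | RN N w => RN (ntshift N) w end.
Definition rhs_wshift (R : rhs) : rhs :=
  match R with
  | RP P w => RP (pwshift P) (wshift w)
  | RN N w => RN (nwshift N) (wshift w)
  end.

(* act G D O R      :  G ; D ; O ==> R            (active)
   lfoc G D N u Q w :  G ; D ; [N @ u] ==> Q @ w   (left focus)
   rfoc G D P w     :  G ; D ==> [P @ w]           (right focus)  *)
Inductive act : list nhyp -> list nhyp -> list phyp -> rhs -> Prop :=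
| a_perm G D D' O O' R :
    Permutation D D' -> Permutation O O' -> act G D O R -> act G D' O' R
| a_tensorL G D O P Q u R :
    act G D ((P, u) :: (Q, u) :: O) R -> act G D ((PTensor P Q, u) :: O) R
| a_oneL G D O u R : act G D O R -> act G D ((POne, u) :: O) R
| a_plusL G D O P Q u R :
    act G D ((P, u) :: O) R -> act G D ((Q, u) :: O) R ->
    act G D ((PPlus P Q, u) :: O) R
| a_downLA G D O P v R :
    act G D ((pwinst v P, v) :: O) R -> act G D ((PDown P, v) :: O) R
| a_atLA G D O P u v R :
    act G D ((P, u) :: O) R -> act G D ((PAt P u, v) :: O) R
| a_exTL G D O P u R :
    act (ntshift_ctx G) (ntshift_ctx D) ((P, u) :: ptshift_ctx O) (rhs_tshift R) ->
    act G D ((PExT P, u) :: O) R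
| a_exWL G D O P u R :
    act (nwshift_ctx G) (nwshift_ctx D) ((P, wshift u) :: pwshift_ctx O) (rhs_wshift R) ->
    act G D ((PExW P, u) :: O) R
| a_bangL G D O N u R : act ((N, u) :: G) D O R -> act G D ((PBang N, u) :: O) R
| a_posL G D O N w R : act G ((N, w) :: D) O R -> act G D ((PPos N, w) :: O) R
| a_lp G D O p ts w R :
    pol p = true ->
    act G ((NNeg (PAtom p ts), w) :: D) O R -> act G D ((PAtom p ts, w) :: O) R
| a_zeroL G D O u R : act G D ((PZero, u) :: O) R
| a_withR G D O M N w :
    act G D O (RN M w) -> act G D O (RN N w) -> act G D O (RN (NWith M N) w)
| a_topR G D O w : act G D O (RN NTop w)
| a_lolliR G D O P N w :
    act G D ((P, w) :: O) (RN N w) -> act G D O (RN (NLolli P N) w)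
| a_downRA G D O N w : act G D O (RN (nwinst w N) w) -> act G D O (RN (NDown N) w)
| a_atRA G D O N u w : act G D O (RN N u) -> act G D O (RN (NAt N u) w)
| a_allTR G D O N u :
    act (ntshift_ctx G) (ntshift_ctx D) (ptshift_ctx O) (RN N u) ->
    act G D O (RN (NAllT N) u)
| a_allWR G D O N u :
    act (nwshift_ctx G) (nwshift_ctx D) (pwshift_ctx O) (RN N (wshift u)) ->
    act G D O (RN (NAllW N) u)
| a_negR G D O P w : act G D O (RP P w) -> act G D O (RN (NNeg P) w)
| a_rp G D O n ts w :
    pol n = false ->
    act G D O (RP (PPos (NAtom n ts)) w) -> act G D O (RN (NAtom n ts) w)
| a_lf G D N u Q w :
    (forall p ts, N <> NNeg (PAtom p ts)) ->
    lfoc G D N u Q w -> act G ((N, u) :: D) [] (RP Q w)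
| a_cplf G D N u Q w :
    In (N, u) G -> lfoc G D N u Q w -> act G D [] (RP Q w)
| a_rf G D P w :
    (forall n ts, P <> PPos (NAtom n ts)) ->
    rfoc G D P w -> act G D [] (RP P w)
with lfoc : list nhyp -> list nhyp -> nprop -> wexp CD -> pprop -> wexp CD -> Prop :=
| l_perm G D D' N u Q w : Permutation D D' -> lfoc G D N u Q w -> lfoc G D' N u Q w
| l_li G n ts w w' :
    pol n = false -> weq w w' -> lfoc G [] (NAtom n ts) w (PPos (NAtom n ts)) w'
| l_negL G D P u Q w : act G D [(P, u)] (RP Q w) -> lfoc G D (NNeg P) u Q w
| l_withL1 G D N1 N2 u Q w : lfoc G D N1 u Q w -> lfoc G D (NWith N1 N2) u Q w
| l_withL2 G D N1 N2 u Q w : lfoc G D N2 u Q w -> lfoc G D (NWith N1 N2) u Q w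
| l_lolliL G D X P N u Q w :
    rfoc G D P u -> lfoc G X N u Q w -> lfoc G (D ++ X) (NLolli P N) u Q w
| l_allTL G D N t u Q w : lfoc G D (ntinst t N) u Q w -> lfoc G D (NAllT N) u Q w
| l_allWL G D N v u Q w : lfoc G D (nwinst v N) u Q w -> lfoc G D (NAllW N) u Q w
| l_downLF G D N v Q w : lfoc G D (nwinst v N) v Q w -> lfoc G D (NDown N) v Q w
| l_atLF G D N u v Q w : lfoc G D N u Q w -> lfoc G D (NAt N u) v Q w
with rfoc : list nhyp -> list nhyp -> pprop -> wexp CD -> Prop :=
| r_perm G D D' P w : Permutation D D' -> rfoc G D P w -> rfoc G D' P w
| r_ri G p ts w w' :
    pol p = true -> weq w w' -> rfoc G [(NNeg (PAtom p ts), w)] (PAtom p ts) w'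
| r_posR G D N w : act G D [] (RN N w) -> rfoc G D (PPos N) w
| r_tensorR G D X P Q w :
    rfoc G D P w -> rfoc G X Q w -> rfoc G (D ++ X) (PTensor P Q) w
| r_plusR1 G D P Q w : rfoc G D P w -> rfoc G D (PPlus P Q) w
| r_plusR2 G D P Q w : rfoc G D Q w -> rfoc G D (PPlus P Q) w
| r_exTR G D P t w : rfoc G D (ptinst t P) w -> rfoc G D (PExT P) w
| r_exWR G D P v w : rfoc G D (pwinst v P) w -> rfoc G D (PExW P) w
| r_bangR G N w : act G [] [] (RN N w) -> rfoc G [] (PBang N) w
| r_downRF G D P w : rfoc G D (pwinst w P) w -> rfoc G D (PDown P) w
| r_atRF G D P u w : rfoc G D P u -> rfoc G D (PAt P u) w
| r_oneR G w : rfoc G [] POne w.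
End Polarized.

(* Main.v *)
Require Import Defs.
From Stdlib Require Import List Permutation.
Import ListNotations.
From Stdlib Require Import FunctionalExtensionality Lia Classical.
Set Implicit Arguments.

Section Sub.
Context {CD : constraint_domain} {Fn Pr : Type}.
Local Notation T := (term Fn).
Local Notation W := (wexp CD).
Local Notation PP := (pprop CD Fn Pr).
Local Notation NN := (nprop CD Fn Pr).

Fixpoint term_ind' (P : T -> Prop) (HV : forall n, P (TVar n))
  (HA : forall f ts, Forall P ts -> P (TApp f ts)) (t : T) : P t :=
  match t with
  | TVar n => HV n
  | TApp f ts => HA f ts ((fix go l : Forall P l :=
        match l with [] => Forall_nil _ | x :: l => Forall_cons _ (@term_ind' P HV HA x) (go l) end) ts)
  end.

Lemma tsub_comp : forall (s1 s2 : nat -> T) t,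
  tsub s1 (tsub s2 t) = tsub (fun n => tsub s1 (s2 n)) t.
Proof.
  intros s1 s2 t; induction t using term_ind'; simpl; auto.
  f_equal. rewrite map_map. induction H; simpl; f_equal; auto.
Qed.

Lemma tsub_id : forall t : T, tsub (@TVar Fn) t = t.
Proof.
  intros t; induction t using term_ind'; simpl; auto.
  f_equal. induction H; simpl; f_equal; auto.
Qed.

Lemma wsub_comp : forall (s1 s2 : nat -> W) u,
  wsub s1 (wsub s2 u) = wsub (fun n => wsub s1 (s2 n)) u.
Proof. intros; induction u; simpl; f_equal; auto. Qed.

Lemma wsub_id : forall u : W, wsub (@WVar CD) u = u.
Proof. intros; induction u; simpl; f_equal; auto. Qed.

Lemma up_t_comp : forall (s1 s2 : nat -> T),
  (fun n => tsub (up_t s1) (up_t s2 n)) = up_t (fun n => tsub s1 (s2 n)).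
Proof.
  intros; apply functional_extensionality; intros [|n]; simpl; auto.
  unfold up_t; simpl. rewrite !tsub_comp. f_equal.
Qed.

Lemma up_w_comp : forall (s1 s2 : nat -> W),
  (fun n => wsub (up_w s1) (up_w s2 n)) = up_w (fun n => wsub s1 (s2 n)).
Proof.
  intros; apply functional_extensionality; intros [|n]; simpl; auto.
  unfold up_w; simpl. rewrite !wsub_comp. f_equal.
Qed.

Lemma up_t_id : up_t (@TVar Fn) = @TVar Fn.
Proof. apply functional_extensionality; intros [|n]; reflexivity. Qed.
Lemma up_w_id : up_w (@WVar CD) = @WVar CD.
Proof. apply functional_extensionality; intros [|n]; reflexivity. Qed.

Scheme pprop_ind2 := Induction for pprop Sort Prop
  with nprop_ind2 := Induction for nprop Sort Prop.
Combined Scheme pn_ind from pprop_ind2, nprop_ind2.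

Lemma pn_comp :
  (forall P : PP, forall st1 sw1 st2 sw2,
     ppsub st1 sw1 (ppsub st2 sw2 P) =
     ppsub (fun n => tsub st1 (st2 n)) (fun n => wsub sw1 (sw2 n)) P) /\
  (forall N : NN, forall st1 sw1 st2 sw2,
     npsub st1 sw1 (npsub st2 sw2 N) =
     npsub (fun n => tsub st1 (st2 n)) (fun n => wsub sw1 (sw2 n)) N).
Proof.
  apply pn_ind; intros; simpl;
  try rewrite ?H, ?H0, ?up_t_comp, ?up_w_comp, ?wsub_comp; auto;
  f_equal; rewrite map_map; apply map_ext; intros; apply tsub_comp.
Qed.

Lemma pp_comp : forall (P : PP) st1 sw1 st2 sw2,
     ppsub st1 sw1 (ppsub st2 sw2 P) =
     ppsub (fun n => tsub st1 (st2 n)) (fun n => wsub sw1 (sw2 n)) P.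
Proof. apply pn_comp. Qed.
Lemma np_comp : forall (N : NN) st1 sw1 st2 sw2,
     npsub st1 sw1 (npsub st2 sw2 N) =
     npsub (fun n => tsub st1 (st2 n)) (fun n => wsub sw1 (sw2 n)) N.
Proof. apply pn_comp. Qed.

Lemma pn_id :
  (forall P : PP, ppsub (@TVar Fn) (@WVar CD) P = P) /\
  (forall N : NN, npsub (@TVar Fn) (@WVar CD) N = N).
Proof.
  apply pn_ind; intros; simpl; rewrite ?up_t_id, ?up_w_id, ?H, ?H0, ?wsub_id; auto.
  all: f_equal; rewrite <- (map_id ts) at 2; apply map_ext; apply tsub_id.
Qed.
Lemma pp_id : forall P : PP, ppsub (@TVar Fn) (@WVar CD) P = P. Proof. apply pn_id. Qed.
Lemma np_id : forall N : NN, npsub (@TVar Fn) (@WVar CD) N = N. Proof. apply pn_id. Qed.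

Definition tsh : nat -> T := fun k => TVar (S k).
Definition wsh : nat -> W := fun k => WVar (S k).

Lemma np_tshift : forall st sw (N : NN),
  npsub (up_t st) sw (ntshift N) = ntshift (npsub st sw N).
Proof.
  intros; unfold ntshift; rewrite !np_comp; f_equal; apply functional_extensionality; intros; simpl; auto.
  rewrite wsub_id; auto.
Qed.
Lemma pp_tshift : forall st sw (P : PP),
  ppsub (up_t st) sw (ptshift P) = ptshift (ppsub st sw P).
Proof.
  intros; unfold ptshift; rewrite !pp_comp; f_equal; apply functional_extensionality; intros; simpl; auto.
  rewrite wsub_id; auto.
Qed.
Lemma np_wshift : forall st sw (N : NN),
  npsub st (up_w sw) (nwshift N) = nwshift (npsub st sw N).
Proof.
  intros; unfold nwshift; rewrite !np_comp; f_equal; apply functional_extensionality; intros; simpl; auto.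
  rewrite tsub_id; auto.
Qed.
Lemma pp_wshift : forall st sw (P : PP),
  ppsub st (up_w sw) (pwshift P) = pwshift (ppsub st sw P).
Proof.
  intros; unfold pwshift; rewrite !pp_comp; f_equal; apply functional_extensionality; intros; simpl; auto.
  rewrite tsub_id; auto.
Qed.
Lemma w_wshift : forall sw (u : W), wsub (up_w sw) (wshift u) = wshift (wsub sw u).
Proof. intros; unfold wshift; rewrite !wsub_comp; auto. Qed.

Ltac subfix := apply functional_extensionality; intros [|?]; simpl;
  unfold up_t, up_w; simpl;
  rewrite ?tsub_comp, ?wsub_comp; simpl; rewrite ?tsub_id, ?wsub_id; auto;
  try (symmetry; apply tsub_id); try (symmetry; apply wsub_id).

Lemma np_tinst : forall st sw t (N : NN),
  npsub st sw (ntinst t N) = ntinst (tsub st t) (npsub (up_t st) sw N).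
Proof. intros; unfold ntinst; rewrite !np_comp; f_equal; subfix. Qed.
Lemma pp_tinst : forall st sw t (P : PP),
  ppsub st sw (ptinst t P) = ptinst (tsub st t) (ppsub (up_t st) sw P).
Proof. intros; unfold ptinst; rewrite !pp_comp; f_equal; subfix. Qed.
Lemma np_winst : forall st sw v (N : NN),
  npsub st sw (nwinst v N) = nwinst (wsub sw v) (npsub st (up_w sw) N).
Proof. intros; unfold nwinst; rewrite !np_comp; f_equal; subfix. Qed.
Lemma pp_winst : forall st sw v (P : PP),
  ppsub st sw (pwinst v P) = pwinst (wsub sw v) (ppsub st (up_w sw) P).
Proof. intros; unfold pwinst; rewrite !pp_comp; f_equal; subfix. Qed.

Lemma np_tinst_shift : forall t (N : NN), ntinst t (ntshift N) = N.
Proof. intros; unfold ntinst, ntshift; rewrite np_comp, <- np_id; f_equal; subfix. Qed.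
Lemma pp_tinst_shift : forall t (P : PP), ptinst t (ptshift P) = P.
Proof. intros; unfold ptinst, ptshift; rewrite pp_comp, <- pp_id; f_equal; subfix. Qed.
Lemma np_winst_shift : forall v (N : NN), nwinst v (nwshift N) = N.
Proof. intros; unfold nwinst, nwshift; rewrite np_comp, <- np_id; f_equal; subfix. Qed.
Lemma pp_winst_shift : forall v (P : PP), pwinst v (pwshift P) = P.
Proof. intros; unfold pwinst, pwshift; rewrite pp_comp, <- pp_id; f_equal; subfix. Qed.
Lemma w_inst_shift : forall v (u : W), wsub (scons v (@WVar CD)) (wshift u) = u.
Proof. intros; unfold wshift; rewrite wsub_comp; simpl; apply wsub_id. Qed.

End Sub.

Scheme act_mind := Induction for act Sort Prop
  with lfoc_mind := Induction for lfoc Sort Prop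
  with rfoc_mind := Induction for rfoc Sort Prop.
Combined Scheme foc_mind from act_mind, lfoc_mind, rfoc_mind.

Section Sub2.
Context {CD : constraint_domain} {Fn Pr : Type}.
Variable pol : Pr -> bool.
Local Notation T := (term Fn).
Local Notation W := (wexp CD).
Local Notation PP := (pprop CD Fn Pr).
Local Notation NN := (nprop CD Fn Pr).
Local Notation act := (act pol).
Local Notation lfoc := (lfoc pol).
Local Notation rfoc := (rfoc pol).
Implicit Types (G D X : list (nhyp CD Fn Pr)) (O : list (phyp CD Fn Pr)) (R : rhs CD Fn Pr)
  (N M : NN) (P Q : PP) (u v w : W) (t : T).

Definition nhs (st : nat -> T) (sw : nat -> W) (h : nhyp CD Fn Pr) : nhyp CD Fn Pr :=
  (npsub st sw (fst h), wsub sw (snd h)).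
Definition phs (st : nat -> T) (sw : nat -> W) (h : phyp CD Fn Pr) : phyp CD Fn Pr :=
  (ppsub st sw (fst h), wsub sw (snd h)).
Definition rsub (st : nat -> T) (sw : nat -> W) (R : rhs CD Fn Pr) : rhs CD Fn Pr :=
  match R with RP P w => RP (ppsub st sw P) (wsub sw w) | RN N w => RN (npsub st sw N) (wsub sw w) end.

Arguments nhs st sw !h /.
Arguments phs st sw !h /.
Arguments rsub st sw !R /.

Lemma weq_sub : forall (u v : W), weq u v -> forall sw, weq (wsub sw u) (wsub sw v).
Proof. induction 1; intros; simpl; eauto using weq. Qed.

Lemma ctx_tshift_n : forall st sw G,
  map (nhs (up_t st) sw) (ntshift_ctx G) = ntshift_ctx (map (nhs st sw) G).
Proof.
  intros; unfold ntshift_ctx; rewrite !map_map; apply map_ext; intros [N u]; unfold nhs; simpl.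
  rewrite np_tshift; auto.
Qed.
Lemma ctx_tshift_p : forall st sw O,
  map (phs (up_t st) sw) (ptshift_ctx O) = ptshift_ctx (map (phs st sw) O).
Proof.
  intros; unfold ptshift_ctx; rewrite !map_map; apply map_ext; intros [N u]; unfold phs; simpl.
  rewrite pp_tshift; auto.
Qed.
Lemma ctx_wshift_n : forall st sw G,
  map (nhs st (up_w sw)) (nwshift_ctx G) = nwshift_ctx (map (nhs st sw) G).
Proof.
  intros; unfold nwshift_ctx; rewrite !map_map; apply map_ext; intros [N u]; unfold nhs; simpl.
  rewrite np_wshift, w_wshift; auto.
Qed.
Lemma ctx_wshift_p : forall st sw O,
  map (phs st (up_w sw)) (pwshift_ctx O) = pwshift_ctx (map (phs st sw) O).
Proof.
  intros; unfold pwshift_ctx; rewrite !map_map; apply map_ext; intros [N u]; unfold phs; simpl.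
  rewrite pp_wshift, w_wshift; auto.
Qed.
Lemma rhs_tshift_sub : forall st sw R,
  rsub (up_t st) sw (rhs_tshift R) = rhs_tshift (rsub st sw R).
Proof. destruct R; simpl; rewrite ?np_tshift, ?pp_tshift; auto. Qed.
Lemma rhs_wshift_sub : forall st sw R,
  rsub st (up_w sw) (rhs_wshift R) = rhs_wshift (rsub st sw R).
Proof. destruct R; simpl; rewrite ?np_wshift, ?pp_wshift, ?w_wshift; auto. Qed.

Lemma subst_foc :
  (forall G D O R, act G D O R -> forall st sw,
      act (map (nhs st sw) G) (map (nhs st sw) D) (map (phs st sw) O) (rsub st sw R)) /\
  (forall G D N u Q w, lfoc G D N u Q w -> forall st sw,
      lfoc (map (nhs st sw) G) (map (nhs st sw) D) (npsub st sw N) (wsub sw u)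
           (ppsub st sw Q) (wsub sw w)) /\
  (forall G D P w, rfoc G D P w -> forall st sw,
      rfoc (map (nhs st sw) G) (map (nhs st sw) D) (ppsub st sw P) (wsub sw w)).
Proof.
  apply foc_mind; intros; cbn [map rsub nhs phs fst snd ppsub npsub] in *;
  try solve [eapply a_perm; [eapply Permutation_map; eassumption | eapply Permutation_map; eassumption | eauto]];
  try solve [eapply l_perm; [eapply Permutation_map; eassumption | eauto]];
  try solve [eapply r_perm; [eapply Permutation_map; eassumption | eauto]];
  try solve [econstructor; eauto using Permutation_map, weq_sub].
  - apply a_downLA. rewrite <- pp_winst. apply (H st sw).
  - apply a_exTL. rewrite <- !ctx_tshift_n, <- !ctx_tshift_p, <- rhs_tshift_sub. apply (H (up_t st) sw).
  - apply a_exWL. rewrite <- !ctx_wshift_n, <- !ctx_wshift_p, <- rhs_wshift_sub, <- w_wshift. apply (H st (up_w sw)).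
  - apply a_downRA. rewrite <- np_winst. apply (H st sw).
  - apply a_allTR. rewrite <- !ctx_tshift_n, <- !ctx_tshift_p. apply (H (up_t st) sw).
  - apply a_allWR. rewrite <- !ctx_wshift_n, <- !ctx_wshift_p, <- w_wshift. apply (H st (up_w sw)).
  - apply a_lf; auto. intros p ts E; destruct N; simpl in E; try discriminate.
    destruct P; simpl in E; try discriminate. injection E; intros; subst; eapply n; eauto.
  - eapply a_cplf; eauto. apply in_map_iff; exists (N, u); auto.
  - apply a_rf; auto. intros p ts E; destruct P; simpl in E; try discriminate.
    destruct N; simpl in E; try discriminate. eapply n; eauto.
  - rewrite map_app; eapply l_lolliL; [apply H | apply H0].
  - apply l_allTL with (t := tsub st t). rewrite <- np_tinst; auto.
  - apply l_allWL with (v := wsub sw v). rewrite <- np_winst; auto.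
  - apply l_downLF. rewrite <- np_winst; auto.
  - rewrite map_app; eapply r_tensorR; [apply H | apply H0].
  - apply r_exTR with (t := tsub st t). rewrite <- pp_tinst; auto.
  - apply r_exWR with (v := wsub sw v). rewrite <- pp_winst; auto.
  - apply r_downRF. rewrite <- pp_winst; auto.
Qed.


Lemma incl_map' : forall A B (f : A -> B) l l', incl l l' -> incl (map f l) (map f l').
Proof. intros; apply incl_map; auto. Qed.

Lemma weak_foc :
  (forall G D O R, act G D O R -> forall G', incl G G' -> act G' D O R) /\
  (forall G D N u Q w, lfoc G D N u Q w -> forall G', incl G G' -> lfoc G' D N u Q w) /\
  (forall G D P w, rfoc G D P w -> forall G', incl G G' -> rfoc G' D P w).
Proof.
  apply foc_mind; intros; try solve [econstructor; eauto using incl_map', incl_cons, in_eq, incl_tl].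
Qed.

Lemma act_weak : forall G D O R G', act G D O R -> incl G G' -> act G' D O R.
Proof. intros; eapply weak_foc; eauto. Qed.
Lemma lfoc_weak : forall G D N u Q w G', lfoc G D N u Q w -> incl G G' -> lfoc G' D N u Q w.
Proof. intros; eapply weak_foc; eauto. Qed.
Lemma rfoc_weak : forall G D P w G', rfoc G D P w -> incl G G' -> rfoc G' D P w.
Proof. intros; eapply weak_foc; eauto. Qed.

Lemma act_sub : forall G D O R st sw, act G D O R ->
  act (map (nhs st sw) G) (map (nhs st sw) D) (map (phs st sw) O) (rsub st sw R).
Proof. intros; apply subst_foc; auto. Qed.
Lemma lfoc_sub : forall G D N u Q w st sw, lfoc G D N u Q w ->
  lfoc (map (nhs st sw) G) (map (nhs st sw) D) (npsub st sw N) (wsub sw u) (ppsub st sw Q) (wsub sw w).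
Proof. intros; apply subst_foc; auto. Qed.
Lemma rfoc_sub : forall G D P w st sw, rfoc G D P w ->
  rfoc (map (nhs st sw) G) (map (nhs st sw) D) (ppsub st sw P) (wsub sw w).
Proof. intros; apply subst_foc; auto. Qed.

Lemma ntshift_ctx_eq : forall G, ntshift_ctx G = map (nhs tsh (@WVar CD)) G.
Proof. intros; unfold ntshift_ctx; apply map_ext; intros [N u]; simpl; rewrite wsub_id; auto. Qed.
Lemma ptshift_ctx_eq : forall O, ptshift_ctx O = map (phs tsh (@WVar CD)) O.
Proof. intros; unfold ptshift_ctx; apply map_ext; intros [N u]; simpl; rewrite wsub_id; auto. Qed.
Lemma rhs_tshift_eq : forall R, rhs_tshift R = rsub tsh (@WVar CD) R.
Proof. destruct R; simpl; rewrite wsub_id; auto. Qed.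
Lemma nwshift_ctx_eq : forall G, nwshift_ctx G = map (nhs (@TVar Fn) wsh) G.
Proof. intros; unfold nwshift_ctx; apply map_ext; intros [N u]; simpl; auto. Qed.
Lemma pwshift_ctx_eq : forall O, pwshift_ctx O = map (phs (@TVar Fn) wsh) O.
Proof. intros; unfold pwshift_ctx; apply map_ext; intros [N u]; simpl; auto. Qed.
Lemma rhs_wshift_eq : forall R, rhs_wshift R = rsub (@TVar Fn) wsh R.
Proof. destruct R; simpl; auto. Qed.

Lemma nhs_comp : forall st1 sw1 st2 sw2 G,
  map (nhs st1 sw1) (map (nhs st2 sw2) G) =
  map (nhs (fun n => tsub st1 (st2 n)) (fun n => wsub sw1 (sw2 n))) G.
Proof. intros; rewrite map_map; apply map_ext; intros [N u]; simpl; rewrite np_comp, wsub_comp; auto. Qed.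
Lemma phs_comp : forall st1 sw1 st2 sw2 O,
  map (phs st1 sw1) (map (phs st2 sw2) O) =
  map (phs (fun n => tsub st1 (st2 n)) (fun n => wsub sw1 (sw2 n))) O.
Proof. intros; rewrite map_map; apply map_ext; intros [N u]; simpl; rewrite pp_comp, wsub_comp; auto. Qed.
Lemma rsub_comp : forall st1 sw1 st2 sw2 R,
  rsub st1 sw1 (rsub st2 sw2 R) = rsub (fun n => tsub st1 (st2 n)) (fun n => wsub sw1 (sw2 n)) R.
Proof. destruct R; simpl; rewrite ?np_comp, ?pp_comp, ?wsub_comp; auto. Qed.
Lemma nhs_id : forall G, map (nhs (@TVar Fn) (@WVar CD)) G = G.
Proof. intros; rewrite <- (map_id G) at 2; apply map_ext; intros [N u]; simpl; rewrite np_id, wsub_id; auto. Qed.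
Lemma phs_id : forall O, map (phs (@TVar Fn) (@WVar CD)) O = O.
Proof. intros; rewrite <- (map_id O) at 2; apply map_ext; intros [N u]; simpl; rewrite pp_id, wsub_id; auto. Qed.
Lemma rsub_id : forall R, rsub (@TVar Fn) (@WVar CD) R = R.
Proof. destruct R; simpl; rewrite ?np_id, ?pp_id, ?wsub_id; auto. Qed.

Lemma tinst_tsh : forall t, (fun n => tsub (scons t (@TVar Fn)) (tsh n)) = @TVar Fn.
Proof. intros; apply functional_extensionality; intros; reflexivity. Qed.
Lemma winst_wsh : forall v, (fun n => wsub (scons v (@WVar CD)) (wsh n)) = @WVar CD.
Proof. intros; apply functional_extensionality; intros; reflexivity. Qed.
Lemma tsub_tvar_l : forall (s : nat -> T), (fun n => tsub (@TVar Fn) (s n)) = s.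
Proof. intros; apply functional_extensionality; intros; apply tsub_id. Qed.
Lemma wsub_wvar_l : forall (s : nat -> W), (fun n => wsub (@WVar CD) (s n)) = s.
Proof. intros; apply functional_extensionality; intros; apply wsub_id. Qed.
Lemma tsub_tvar_r : forall (s : nat -> T), (fun n => tsub s (TVar n)) = s.
Proof. intros; apply functional_extensionality; intros; reflexivity. Qed.
Lemma wsub_wvar_r : forall (s : nat -> W), (fun n => wsub s (WVar n)) = s.
Proof. intros; apply functional_extensionality; intros; reflexivity. Qed.

Lemma act_tinst : forall G D O P u R t,
  act (ntshift_ctx G) (ntshift_ctx D) ((P, u) :: ptshift_ctx O) (rhs_tshift R) ->
  act G D ((ptinst t P, u) :: O) R.
Proof.
  intros. apply (act_sub (scons t (@TVar Fn)) (@WVar CD)) in H.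
  rewrite !ntshift_ctx_eq, ptshift_ctx_eq, rhs_tshift_eq, !nhs_comp in H.
  cbn [map phs fst snd] in H. rewrite phs_comp, rsub_comp, tinst_tsh, wsub_wvar_r, wsub_id in H.
  rewrite !nhs_id, phs_id, rsub_id in H. exact H.
Qed.

Lemma act_winst : forall G D O P u R v,
  act (nwshift_ctx G) (nwshift_ctx D) ((P, wshift u) :: pwshift_ctx O) (rhs_wshift R) ->
  act G D ((pwinst v P, u) :: O) R.
Proof.
  intros. apply (act_sub (@TVar Fn) (scons v (@WVar CD))) in H.
  rewrite !nwshift_ctx_eq, pwshift_ctx_eq, rhs_wshift_eq, !nhs_comp in H.
  cbn [map phs fst snd] in H. rewrite phs_comp, rsub_comp, winst_wsh, tsub_tvar_r, w_inst_shift in H.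
  rewrite !nhs_id, phs_id, rsub_id in H. exact H.
Qed.

Lemma act_tshift : forall G D O R, act G D O R ->
  act (ntshift_ctx G) (ntshift_ctx D) (ptshift_ctx O) (rhs_tshift R).
Proof. intros; rewrite ntshift_ctx_eq, ntshift_ctx_eq, ptshift_ctx_eq, rhs_tshift_eq; apply act_sub; auto. Qed.
Lemma act_wshift : forall G D O R, act G D O R ->
  act (nwshift_ctx G) (nwshift_ctx D) (pwshift_ctx O) (rhs_wshift R).
Proof. intros; rewrite nwshift_ctx_eq, nwshift_ctx_eq, pwshift_ctx_eq, rhs_wshift_eq; apply act_sub; auto. Qed.

End Sub2.
Arguments nhs {CD Fn Pr} st sw !h /.
Arguments phs {CD Fn Pr} st sw !h /.
Arguments rsub {CD Fn Pr} st sw !R /.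

Lemma perm_cons_cases : forall A (a b : A) l l',
  Permutation (a :: l) (b :: l') ->
  (a = b /\ Permutation l l') \/ (exists l'', Permutation l (b :: l'') /\ Permutation l' (a :: l'')).
Proof.
  intros. destruct (classic (a = b)) as [E|E].
  - subst. left; split; auto. eapply Permutation_cons_inv; eauto.
  - right. assert (In b l). { assert (In b (a :: l)) by (eapply Permutation_in; [symmetry; eauto| left; auto]).
      destruct H0; [congruence|auto]. }
    apply in_split in H0. destruct H0 as [l1 [l2 ->]].
    exists (l1 ++ l2). split. { symmetry; apply Permutation_middle. }
    apply Permutation_cons_inv with b.
    rewrite <- H. transitivity (a :: b :: l1 ++ l2); [apply perm_skip; symmetry; apply Permutation_middle | apply perm_swap].
Qed.

Lemma perm_app_in : forall A (x : A) l1 l2 l,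
  Permutation (l1 ++ l2) (x :: l) ->
  (exists l1', Permutation l1 (x :: l1') /\ Permutation l (l1' ++ l2)) \/
  (exists l2', Permutation l2 (x :: l2') /\ Permutation l (l1 ++ l2')).
Proof.
  intros. assert (In x (l1 ++ l2)) by (eapply Permutation_in; [symmetry; eauto | left; auto]).
  apply in_app_or in H0; destruct H0 as [H0|H0]; apply in_split in H0; destruct H0 as [a [b ->]].
  - left. exists (a ++ b). split. { symmetry; apply Permutation_middle. }
    apply Permutation_cons_inv with x. rewrite <- H. rewrite <- !app_assoc. simpl.
    symmetry; apply Permutation_middle.
  - right. exists (a ++ b). split. { symmetry; apply Permutation_middle. }
    apply Permutation_cons_inv with x. rewrite <- H. rewrite !app_assoc.
    symmetry; apply Permutation_middle.
Qed.

Section S3.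
Context {CD : constraint_domain} {Fn Pr : Type}.
Variable pol : Pr -> bool.
Local Notation T := (term Fn).
Local Notation W := (wexp CD).
Local Notation PP := (pprop CD Fn Pr).
Local Notation NN := (nprop CD Fn Pr).
Local Notation act := (act pol).
Local Notation lfoc := (lfoc pol).
Local Notation rfoc := (rfoc pol).
Implicit Types (G D X : list (nhyp CD Fn Pr)) (O : list (phyp CD Fn Pr)) (R : rhs CD Fn Pr)
  (N M : NN) (P Q : PP) (u v w : W) (t : T).

Fixpoint psize (P : PP) : nat :=
  match P with
  | PAtom _ _ => 1
  | PTensor P Q => S (psize P + psize Q)
  | POne => 1
  | PPlus P Q => S (psize P + psize Q)
  | PZero => 1
  | PBang N => S (nsize N)
  | PExT P => S (psize P)
  | PExW P => S (psize P)
  | PDown P => S (psize P)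
  | PAt P _ => S (psize P)
  | PPos N => S (nsize N)
  end
with nsize (N : NN) : nat :=
  match N with
  | NAtom _ _ => 1
  | NWith N M => S (nsize N + nsize M)
  | NTop => 1
  | NLolli P N => S (psize P + nsize N)
  | NAllT N => S (nsize N)
  | NAllW N => S (nsize N)
  | NDown N => S (nsize N)
  | NAt N _ => S (nsize N)
  | NNeg P => S (psize P)
  end.

Lemma size_sub :
  (forall P st sw, psize (ppsub st sw P) = psize P) /\
  (forall N st sw, nsize (npsub st sw N) = nsize N).
Proof. apply pn_ind; intros; simpl; rewrite ?H, ?H0; auto. Qed.
Lemma psize_sub : forall P st sw, psize (ppsub st sw P) = psize P. Proof. apply size_sub. Qed.
Lemma nsize_sub : forall N st sw, nsize (npsub st sw N) = nsize N. Proof. apply size_sub. Qed.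

Ltac inv_start H := induction H; intros; subst; try discriminate;
  repeat match goal with
  | E : _ :: _ = [] |- _ => discriminate E
  | E : [] = _ :: _ |- _ => discriminate E
  | E : RN _ _ = RN _ _ |- _ => injection E; intros; subst; clear E
  | E : RP _ _ = RP _ _ |- _ => injection E; intros; subst; clear E
  | E : _ :: _ = _ :: _ |- _ => injection E; intros; subst; clear E
  | E : (_, _) = (_, _) |- _ => injection E; intros; subst; clear E
  | E : PPos _ = PPos _ |- _ => injection E; intros; subst; clear E
  | E : PAtom _ _ = PAtom _ _ |- _ => injection E; intros; subst; clear E
  end.

Lemma perm_nil_l : forall A (l : list A), Permutation l [] -> l = [].
Proof. intros; apply Permutation_nil; symmetry; auto. Qed.

Lemma invR_neg : forall G D O R, act G D O R -> forall P u, O = [] -> R = RN (NNeg P) u ->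
  act G D [] (RP P u).
Proof.
  intros G D O R H; inv_start H.
  - match goal with Hp : Permutation ?O [] |- _ => apply perm_nil_l in Hp; subst end. eapply a_perm; eauto.
  - auto.
Qed.
Lemma invR_rp : forall G D O R, act G D O R -> forall n ts u, O = [] -> R = RN (NAtom n ts) u ->
  act G D [] (RP (PPos (NAtom n ts)) u).
Proof.
  intros G D O R H; inv_start H.
  - match goal with Hp : Permutation ?O [] |- _ => apply perm_nil_l in Hp; subst end. eapply a_perm; eauto.
  - auto.
Qed.
Lemma invR_lolli : forall G D O R, act G D O R -> forall P N u, O = [] -> R = RN (NLolli P N) u ->
  act G D [(P, u)] (RN N u).
Proof.
  intros G D O R H; inv_start H.
  - match goal with Hp : Permutation ?O [] |- _ => apply perm_nil_l in Hp; subst end. eapply a_perm; eauto.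
  - auto.
Qed.
Lemma invR_with : forall G D O R, act G D O R -> forall N M u, O = [] -> R = RN (NWith N M) u ->
  act G D [] (RN N u) /\ act G D [] (RN M u).
Proof.
  intros G D O R H; inv_start H.
  - match goal with Hp : Permutation ?O [] |- _ => apply perm_nil_l in Hp; subst end. destruct (IHact _ _ _ eq_refl eq_refl); split; eapply a_perm; eauto.
  - auto.
Qed.
Lemma invR_allT : forall G D O R, act G D O R -> forall N u, O = [] -> R = RN (NAllT N) u ->
  act (ntshift_ctx G) (ntshift_ctx D) [] (RN N u).
Proof.
  intros G D O R H; inv_start H.
  - match goal with Hp : Permutation ?O [] |- _ => apply perm_nil_l in Hp; subst end. eapply a_perm; [apply Permutation_map; eauto | apply Permutation_refl | eauto].
  - auto.
Qed.
Lemma invR_allW : forall G D O R, act G D O R -> forall N u, O = [] -> R = RN (NAllW N) u ->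
  act (nwshift_ctx G) (nwshift_ctx D) [] (RN N (wshift u)).
Proof.
  intros G D O R H; inv_start H.
  - match goal with Hp : Permutation ?O [] |- _ => apply perm_nil_l in Hp; subst end. eapply a_perm; [apply Permutation_map; eauto | apply Permutation_refl | eauto].
  - auto.
Qed.
Lemma invR_down : forall G D O R, act G D O R -> forall N u, O = [] -> R = RN (NDown N) u ->
  act G D [] (RN (nwinst u N) u).
Proof.
  intros G D O R H; inv_start H.
  - match goal with Hp : Permutation ?O [] |- _ => apply perm_nil_l in Hp; subst end. eapply a_perm; eauto.
  - auto.
Qed.
Lemma invR_at : forall G D O R, act G D O R -> forall N u w, O = [] -> R = RN (NAt N u) w ->
  act G D [] (RN N u).
Proof.
  intros G D O R H; inv_start H.
  - match goal with Hp : Permutation ?O [] |- _ => apply perm_nil_l in Hp; subst end. eapply a_perm; eauto.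
  - auto.
Qed.

Lemma invL_pos1 : forall G D O R, act G D O R -> forall N u Q w, O = [(PPos N, u)] -> R = RP Q w ->
  act G ((N, u) :: D) [] (RP Q w).
Proof.
  intros G D O R H; inv_start H.
  - match goal with Hp : Permutation _ _ |- _ => apply Permutation_sym, Permutation_length_1_inv in Hp; subst end. eapply a_perm; [apply perm_skip; eauto | apply Permutation_refl | eauto].
  - auto.
Qed.
Lemma invL_lp1 : forall G D O R, act G D O R -> forall p ts u Q w, O = [(PAtom p ts, u)] -> R = RP Q w ->
  act G ((NNeg (PAtom p ts), u) :: D) [] (RP Q w).
Proof.
  intros G D O R H; inv_start H.
  - match goal with Hp : Permutation _ _ |- _ => apply Permutation_sym, Permutation_length_1_inv in Hp; subst end. eapply a_perm; [apply perm_skip; eauto | apply Permutation_refl | eauto].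
  - auto.
Qed.

Lemma inv_lfoc_neg : forall G D N u Q w, lfoc G D N u Q w -> forall P, N = NNeg P ->
  act G D [(P, u)] (RP Q w).
Proof.
  induction 1; intros; try discriminate.
  - eapply a_perm; eauto.
  - injection H0; intros; subst; auto.
Qed.


Lemma aw1_all :
  (forall G D O R, act G D O R -> forall n ts u u', R = RP (PPos (NAtom n ts)) u -> weq u u' ->
     act G D O (RP (PPos (NAtom n ts)) u')) /\
  (forall G D N v Q w, lfoc G D N v Q w -> forall n ts w', Q = PPos (NAtom n ts) -> weq w w' ->
     lfoc G D N v Q w') /\
  (forall G D P w, rfoc G D P w -> True).
Proof.
  apply foc_mind; intros; subst; try discriminate; auto;
  repeat match goal with E : RP _ _ = RP _ _ |- _ => injection E; intros; subst; clear E end;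
  try solve [econstructor; eauto].
  - apply a_exTL. eapply H; [reflexivity|auto].
  - apply a_exWL. eapply H; [reflexivity|apply weq_sub; auto].
  - exfalso; eapply n; eauto.
  - apply l_li; eauto using weq_trans.
Qed.

Lemma aw1 : forall G D O n ts u u', act G D O (RP (PPos (NAtom n ts)) u) -> weq u u' ->
  act G D O (RP (PPos (NAtom n ts)) u').
Proof. intros; eapply aw1_all; eauto. Qed.
Lemma aw1l : forall G D N v n ts w w', lfoc G D N v (PPos (NAtom n ts)) w -> weq w w' ->
  lfoc G D N v (PPos (NAtom n ts)) w'.
Proof. intros; eapply aw1_all; eauto. Qed.

End S3.

Section HypRepl.
Context {CD : constraint_domain} {Fn Pr : Type}.
Variable pol : Pr -> bool.
Local Notation T := (term Fn).
Local Notation W := (wexp CD).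
Local Notation PP := (pprop CD Fn Pr).
Local Notation NN := (nprop CD Fn Pr).
Local Notation act := (act pol).
Local Notation lfoc := (lfoc pol).
Local Notation rfoc := (rfoc pol).
Local Notation nh := (nhyp CD Fn Pr).
Implicit Types (G D X Y : list nh) (O : list (phyp CD Fn Pr)) (R : rhs CD Fn Pr)
  (N M : NN) (P Q : PP) (u v w : W) (t : T).

Variable Phi : list nh -> nh -> list nh -> Prop.
Hypothesis Phi_sub : forall G x Y st sw, Phi G x Y ->
  Phi (map (nhs st sw) G) (nhs st sw x) (map (nhs st sw) Y).
Hypothesis Phi_weak : forall G G' x Y, Phi G x Y -> incl G G' -> Phi G' x Y.
Hypothesis Phi_lf : forall G N u Y Dl Q w, Phi G (N, u) Y ->
  (forall p ts, N <> NNeg (PAtom p ts)) -> lfoc G Dl N u Q w -> act G (Y ++ Dl) [] (RP Q w).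
Hypothesis Phi_ri : forall G p ts u Y w, Phi G (NNeg (PAtom p ts), u) Y -> weq u w ->
  pol p = true -> rfoc G Y (PAtom p ts) w.

Lemma perm_cons2 : forall A (a x : A) l l0, Permutation l (x :: l0) ->
  Permutation (a :: l) (x :: a :: l0).
Proof. intros. eapply perm_trans; [apply perm_skip; eauto | apply perm_swap]. Qed.

Lemma Yperm : forall A (a : A) l l0, Permutation (l ++ a :: l0) (a :: l ++ l0).
Proof. intros; symmetry; apply Permutation_middle. Qed.

Lemma hyp_repl :
  (forall G D O R, act G D O R -> forall x D0 Y, Permutation D (x :: D0) -> Phi G x Y ->
     act G (Y ++ D0) O R) /\
  (forall G D N u Q w, lfoc G D N u Q w -> forall x D0 Y, Permutation D (x :: D0) -> Phi G x Y ->
     lfoc G (Y ++ D0) N u Q w) /\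
  (forall G D P w, rfoc G D P w -> forall x D0 Y, Permutation D (x :: D0) -> Phi G x Y ->
     rfoc G (Y ++ D0) P w).
Proof.
  apply foc_mind; intros;
  try solve [econstructor; eauto];
  try solve [ match goal with Hp : Permutation [] (_ :: _) |- _ => apply Permutation_nil in Hp; discriminate end ].
  - eapply a_perm; [apply Permutation_refl | eauto | ]. eapply H; eauto. eapply perm_trans; eauto.
  - apply a_exTL. repeat rewrite ntshift_ctx_eq in *; repeat rewrite ptshift_ctx_eq in *; repeat rewrite rhs_tshift_eq in *.
    specialize (H (nhs tsh (@WVar CD) x) (map (nhs tsh (@WVar CD)) D0) (map (nhs tsh (@WVar CD)) Y)).
    rewrite <- map_app in H. apply H.
    + change (nhs tsh (@WVar CD) x :: map (nhs tsh (@WVar CD)) D0) with (map (nhs tsh (@WVar CD)) (x :: D0)).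
      apply Permutation_map; auto.
    + apply Phi_sub; auto.
  - apply a_exWL. repeat rewrite nwshift_ctx_eq in *; repeat rewrite pwshift_ctx_eq in *; repeat rewrite rhs_wshift_eq in *.
    specialize (H (nhs (@TVar Fn) wsh x) (map (nhs (@TVar Fn) wsh) D0) (map (nhs (@TVar Fn) wsh) Y)).
    rewrite <- map_app in H. apply H.
    + change (nhs (@TVar Fn) wsh x :: map (nhs (@TVar Fn) wsh) D0) with (map (nhs (@TVar Fn) wsh) (x :: D0)).
      apply Permutation_map; auto.
    + apply Phi_sub; auto.
  - apply a_bangL. eapply H; eauto. eapply Phi_weak; eauto. intros z Hz; right; auto.
  - apply a_posL. eapply a_perm; [apply Yperm | apply Permutation_refl | ]. eapply H; eauto. apply perm_cons2; auto.
  - apply a_lp; auto. eapply a_perm; [apply Yperm | apply Permutation_refl | ]. eapply H; eauto. apply perm_cons2; auto.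
  - apply a_allTR. repeat rewrite ntshift_ctx_eq in *; repeat rewrite ptshift_ctx_eq in *.
    specialize (H (nhs tsh (@WVar CD) x) (map (nhs tsh (@WVar CD)) D0) (map (nhs tsh (@WVar CD)) Y)).
    rewrite <- map_app in H. apply H.
    + change (nhs tsh (@WVar CD) x :: map (nhs tsh (@WVar CD)) D0) with (map (nhs tsh (@WVar CD)) (x :: D0)).
      apply Permutation_map; auto.
    + apply Phi_sub; auto.
  - apply a_allWR. repeat rewrite nwshift_ctx_eq in *; repeat rewrite pwshift_ctx_eq in *.
    specialize (H (nhs (@TVar Fn) wsh x) (map (nhs (@TVar Fn) wsh) D0) (map (nhs (@TVar Fn) wsh) Y)).
    rewrite <- map_app in H. apply H.
    + change (nhs (@TVar Fn) wsh x :: map (nhs (@TVar Fn) wsh) D0) with (map (nhs (@TVar Fn) wsh) (x :: D0)).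
      apply Permutation_map; auto.
    + apply Phi_sub; auto.
  -
    destruct (perm_cons_cases H0) as [[E Hp]|[l1 [Hp1 Hp2]]].
    + subst x. eapply a_perm; [ | apply Permutation_refl | eapply Phi_lf; eauto ].
      apply Permutation_app_head; auto.
    + eapply a_perm; [ | apply Permutation_refl | apply a_lf; [auto | eapply H; eauto]].
      rewrite Hp2. symmetry; apply Yperm.
  - eapply H; eauto. eapply perm_trans; eauto.
  -
    destruct (perm_app_in _ _ H1) as [[l1 [Hp1 Hp2]]|[l1 [Hp1 Hp2]]].
    + eapply l_perm; [ | eapply l_lolliL; [eapply H; eauto | eauto]].
      rewrite Hp2, app_assoc; auto.
    + eapply l_perm; [ | eapply l_lolliL; [eauto | eapply H0; eauto]].
      rewrite Hp2, !app_assoc. apply Permutation_app_tail. apply Permutation_app_comm.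
  - eapply H; eauto. eapply perm_trans; eauto.
  -
    apply Permutation_length_1_inv in H. injection H; intros; subst.
    rewrite app_nil_r. eapply Phi_ri; eauto.
  -
    destruct (perm_app_in _ _ H1) as [[l1 [Hp1 Hp2]]|[l1 [Hp1 Hp2]]].
    + eapply r_perm; [ | eapply r_tensorR; [eapply H; eauto | eauto]].
      rewrite Hp2, app_assoc; auto.
    + eapply r_perm; [ | eapply r_tensorR; [eauto | eapply H0; eauto]].
      rewrite Hp2, !app_assoc. apply Permutation_app_tail. apply Permutation_app_comm.
Qed.

End HypRepl.


Section Inv2.
Context {CD : constraint_domain} {Fn Pr : Type}.
Variable pol : Pr -> bool.
Local Notation T := (term Fn).
Local Notation W := (wexp CD).
Local Notation PP := (pprop CD Fn Pr).
Local Notation NN := (nprop CD Fn Pr).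
Local Notation act := (act pol).
Local Notation lfoc := (lfoc pol).
Local Notation rfoc := (rfoc pol).
Local Notation nh := (nhyp CD Fn Pr).
Implicit Types (G D X Y : list nh) (O : list (phyp CD Fn Pr)) (R : rhs CD Fn Pr)
  (N M : NN) (P Q : PP) (u v w : W) (t : T).

Definition Phi_aw (G : list nh) (x : nh) (Y : list nh) : Prop :=
  exists p ts u u', x = (NNeg (PAtom p ts), u) /\ Y = [(NNeg (PAtom p ts), u')] /\ weq u' u.

Lemma Phi_aw_sub : forall G x Y st sw, Phi_aw G x Y ->
  Phi_aw (map (nhs st sw) G) (nhs st sw x) (map (nhs st sw) Y).
Proof.
  intros G0 x Y st sw [p0 [ts0 [u0 [u1 [-> [-> E]]]]]].
  exists p0, (map (tsub st) ts0), (wsub sw u0), (wsub sw u1); repeat split; auto. apply weq_sub; auto.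
Qed.
Lemma Phi_aw_weak : forall G G' x Y, Phi_aw G x Y -> incl G G' -> Phi_aw G' x Y.
Proof. unfold Phi_aw; auto. Qed.
Lemma Phi_aw_lf : forall G N u Y Dl Q w, Phi_aw G (N, u) Y ->
  (forall p ts, N <> NNeg (PAtom p ts)) -> lfoc G Dl N u Q w -> act G (Y ++ Dl) [] (RP Q w).
Proof.
  intros G0 N u0 Y Dl Q w [p0 [ts0 [u1 [u2 [E1 [-> E]]]]]] Hn; injection E1; intros; subst.
  exfalso; eapply Hn; eauto.
Qed.
Lemma Phi_aw_ri : forall G p ts u Y w, Phi_aw G (NNeg (PAtom p ts), u) Y -> weq u w ->
  pol p = true -> rfoc G Y (PAtom p ts) w.
Proof.
  intros G0 p0 ts0 u0 Y w [p1 [ts1 [u1 [u2 [E1 [-> E]]]]]] Hw Hp; injection E1; intros; subst.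
  apply r_ri; eauto using weq_trans.
Qed.

Lemma aw2 : forall G D O R p ts u u', act G ((NNeg (PAtom p ts), u) :: D) O R -> weq u' u ->
  act G ((NNeg (PAtom p ts), u') :: D) O R.
Proof.
  intros. change ((NNeg (PAtom p ts), u') :: D) with ([(NNeg (PAtom p ts), u')] ++ D).
  eapply (proj1 (hyp_repl (pol := pol) Phi_aw Phi_aw_sub Phi_aw_weak Phi_aw_lf Phi_aw_ri)); eauto.
  exists p, ts, u, u'; auto.
Qed.

Lemma focus_hyp : forall G D N u Q w, lfoc G D N u Q w -> act G ((N, u) :: D) [] (RP Q w).
Proof.
  intros. destruct (classic (exists p ts, N = NNeg (PAtom p ts))) as [[p [ts E]]|E].
  - subst. eapply inv_lfoc_neg in H; eauto. eapply invL_lp1; eauto.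
  - apply a_lf; auto. intros p ts E'; apply E; eauto.
Qed.

Ltac rinv := intros G D P0 w H; induction H; intros; subst; try discriminate;
  repeat match goal with E : _ = _ |- _ => injection E; intros; subst; clear E end.

Lemma rinv_tensor : forall G D P0 w, rfoc G D P0 w -> forall P Q, P0 = PTensor P Q ->
  exists D1 D2, Permutation D (D1 ++ D2) /\ rfoc G D1 P w /\ rfoc G D2 Q w.
Proof.
  rinv.
  - destruct (IHrfoc _ _ eq_refl) as [D1 [D2 [? [? ?]]]]. exists D1, D2; split; auto.
    eapply perm_trans; [symmetry; eauto | auto].
  - exists D, X; auto.
Qed.
Lemma rinv_one : forall G D P0 w, rfoc G D P0 w -> P0 = POne -> Permutation D [].
Proof. rinv. - eapply perm_trans; [symmetry; eauto | auto]. - auto. Qed.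
Lemma rinv_plus : forall G D P0 w, rfoc G D P0 w -> forall P Q, P0 = PPlus P Q ->
  rfoc G D P w \/ rfoc G D Q w.
Proof.
  rinv. - destruct (IHrfoc _ _ eq_refl); [left|right]; eapply r_perm; eauto.
  - left; auto. - right; auto.
Qed.
Lemma rinv_zero : forall G D P0 w, rfoc G D P0 w -> P0 = PZero -> False.
Proof. rinv. auto. Qed.
Lemma rinv_bang : forall G D P0 w, rfoc G D P0 w -> forall N, P0 = PBang N ->
  Permutation D [] /\ act G [] [] (RN N w).
Proof.
  rinv. - destruct (IHrfoc _ eq_refl); split; auto. eapply perm_trans; [symmetry; eauto | auto].
  - auto.
Qed.
Lemma rinv_exT : forall G D P0 w, rfoc G D P0 w -> forall P, P0 = PExT P ->
  exists t, rfoc G D (ptinst t P) w.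
Proof. rinv. - destruct (IHrfoc _ eq_refl) as [t ?]; exists t; eapply r_perm; eauto. - eauto. Qed.
Lemma rinv_exW : forall G D P0 w, rfoc G D P0 w -> forall P, P0 = PExW P ->
  exists v, rfoc G D (pwinst v P) w.
Proof. rinv. - destruct (IHrfoc _ eq_refl) as [t ?]; exists t; eapply r_perm; eauto. - eauto. Qed.
Lemma rinv_down : forall G D P0 w, rfoc G D P0 w -> forall P, P0 = PDown P -> rfoc G D (pwinst w P) w.
Proof. rinv. - eapply r_perm; eauto. - eauto. Qed.
Lemma rinv_at : forall G D P0 w, rfoc G D P0 w -> forall P u, P0 = PAt P u -> rfoc G D P u.
Proof. rinv. - eapply r_perm; eauto. - eauto. Qed.
Lemma rinv_pos : forall G D P0 w, rfoc G D P0 w -> forall N, P0 = PPos N -> act G D [] (RN N w).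
Proof. rinv. - eapply a_perm; eauto. - eauto. Qed.
Lemma rinv_atom : forall G D P0 w, rfoc G D P0 w -> forall p ts, P0 = PAtom p ts ->
  exists u, Permutation D [(NNeg (PAtom p ts), u)] /\ weq u w /\ pol p = true.
Proof.
  rinv. - destruct (IHrfoc _ _ eq_refl) as [u [? [? ?]]]; exists u; split; auto.
    eapply perm_trans; [symmetry; eauto | auto].
  - exists w; auto.
Qed.

End Inv2.

Section ST.
Context {CD : constraint_domain} {Fn Pr : Type}.
Variable pol : Pr -> bool.
Local Notation T := (term Fn).
Local Notation W := (wexp CD).
Local Notation PP := (pprop CD Fn Pr).
Local Notation NN := (nprop CD Fn Pr).
Local Notation act := (act pol).
Local Notation lfoc := (lfoc pol).
Local Notation rfoc := (rfoc pol).
Local Notation nh := (nhyp CD Fn Pr).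
Implicit Types (G D X Y E : list nh) (O : list (phyp CD Fn Pr)) (R : rhs CD Fn Pr)
  (N M : NN) (P Q : PP) (u v w : W) (t : T).

(* continuation: from a right focus on P at u, derive a stable sequent *)
Definition Kont G P u E Q w : Prop :=
  forall st sw G' Dz, incl (map (nhs st sw) G) G' ->
    rfoc G' Dz (ppsub st sw P) (wsub sw u) ->
    act G' (Dz ++ map (nhs st sw) E) [] (RP (ppsub st sw Q) (wsub sw w)).

Lemma Kont_sub : forall G P u E Q w st sw, Kont G P u E Q w ->
  Kont (map (nhs st sw) G) (ppsub st sw P) (wsub sw u) (map (nhs st sw) E) (ppsub st sw Q) (wsub sw w).
Proof.
  unfold Kont; intros. rewrite !nhs_comp in *. rewrite !pp_comp, !wsub_comp in *. apply H; auto.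
Qed.
Lemma Kont_weak : forall G G2 P u E Q w, Kont G P u E Q w -> incl G G2 -> Kont G2 P u E Q w.
Proof. unfold Kont; intros. apply H; auto. eapply incl_tran; [apply incl_map'; eauto | auto]. Qed.
Lemma Kont_id : forall G P u E Q w D, Kont G P u E Q w -> rfoc G D P u -> act G (D ++ E) [] (RP Q w).
Proof.
  unfold Kont; intros. specialize (H (@TVar Fn) (@WVar CD) G D).
  rewrite !nhs_id, !pp_id, !wsub_id in H. apply H; auto. apply incl_refl.
Qed.

Lemma Kont_tshift : forall G P u E Q w, Kont G P u E Q w ->
  Kont (ntshift_ctx G) (ptshift P) u (ntshift_ctx E) (ptshift Q) w.
Proof.
  intros. rewrite !ntshift_ctx_eq. pose proof (Kont_sub tsh (@WVar CD) H). rewrite !wsub_id in H0. exact H0.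
Qed.
Lemma Kont_wshift : forall G P u E Q w, Kont G P u E Q w ->
  Kont (nwshift_ctx G) (pwshift P) (wshift u) (nwshift_ctx E) (pwshift Q) (wshift w).
Proof.
  intros. rewrite !nwshift_ctx_eq. exact (Kont_sub (@TVar Fn) wsh H).
Qed.

Lemma ntshift_ctx_app : forall l1 l2 : list nh, ntshift_ctx (l1 ++ l2) = ntshift_ctx l1 ++ ntshift_ctx l2.
Proof. intros; apply map_app. Qed.
Lemma nwshift_ctx_app : forall l1 l2 : list nh, nwshift_ctx (l1 ++ l2) = nwshift_ctx l1 ++ nwshift_ctx l2.
Proof. intros; apply map_app. Qed.

Definition notPA (P : PP) := forall n ts, P = PPos (NAtom n ts) -> pol n = true.

Lemma notPA_sub : forall P st sw, notPA P -> notPA (ppsub st sw P).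
Proof.
  unfold notPA; intros P st sw H n ts E. destruct P as [ | | | | | | | | | | N0]; cbn in E; try discriminate.
  destruct N0; cbn in E; try discriminate. injection E; intros; subst. eapply H; eauto.
Qed.

Lemma st_main :
  (forall G D O R, act G D O R -> forall P u E Q w, R = RP P u -> notPA P ->
     Kont G P u E Q w -> act G (D ++ E) O (RP Q w)) /\
  (forall G D M v P u, lfoc G D M v P u -> forall E Q w, notPA P ->
     Kont G P u E Q w -> lfoc G (D ++ E) M v Q w) /\
  (forall G D P w, rfoc G D P w -> True).
Proof.
  apply foc_mind; intros; subst; try discriminate; auto;
  repeat match goal with Ee : RP _ _ = RP _ _ |- _ => injection Ee; intros; subst; clear Ee end.
  - eapply a_perm; [apply Permutation_app_tail; eauto | eauto | eauto].
  - apply a_tensorL; eauto.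
  - apply a_oneL; eauto.
  - apply a_plusL; eauto.
  - apply a_downLA; eauto.
  - apply a_atLA; eauto.
  - apply a_exTL. rewrite ntshift_ctx_app.
    eapply H; [reflexivity | apply notPA_sub; auto | ]. apply Kont_tshift in H2. exact H2.
  - apply a_exWL. rewrite nwshift_ctx_app.
    eapply H; [reflexivity | apply notPA_sub; auto | ]. apply Kont_wshift in H2. exact H2.
  - apply a_bangL. eapply H; eauto. eapply Kont_weak; eauto. intros z Hz; right; auto.
  - apply a_posL. eapply H; eauto.
  - apply a_lp; auto. eapply H; eauto.
  - apply a_zeroL.
  - eapply a_lf; eauto.
  - eapply a_cplf; eauto.
  - eapply Kont_id; eauto.
  - eapply l_perm; [apply Permutation_app_tail; eauto | eauto].
  - rewrite (H _ _ eq_refl) in e; discriminate.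
  - apply l_negL. eapply H; eauto.
  - apply l_withL1; eauto.
  - apply l_withL2; eauto.
  - rewrite <- app_assoc. eapply l_lolliL; eauto.
  - eapply l_allTL; eauto.
  - eapply l_allWL; eauto.
  - eapply l_downLF; eauto.
  - eapply l_atLF; eauto.
Qed.

Lemma st_top : forall G D P u E Q w, act G D [] (RP P u) -> Kont G P u E Q w ->
  act G (D ++ E) [] (RP Q w).
Proof.
  intros. destruct (classic (notPA P)) as [HP|HP].
  - eapply st_main; eauto.
  - unfold notPA in HP. apply not_all_ex_not in HP; destruct HP as [n HP].
    apply not_all_ex_not in HP; destruct HP as [ts HP].
    apply imply_to_and in HP; destruct HP as [HP1 HP2]; subst.
    eapply Kont_id; eauto. apply r_posR. eapply a_rp; eauto. destruct (pol n); auto; congruence.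
Qed.

End ST.

Section Cut1.
Context {CD : constraint_domain} {Fn Pr : Type}.
Variable pol : Pr -> bool.
Local Notation T := (term Fn).
Local Notation W := (wexp CD).
Local Notation PP := (pprop CD Fn Pr).
Local Notation NN := (nprop CD Fn Pr).
Local Notation act := (act pol).
Local Notation lfoc := (lfoc pol).
Local Notation rfoc := (rfoc pol).
Local Notation nh := (nhyp CD Fn Pr).
Implicit Types (G D X Y E : list nh) (O : list (phyp CD Fn Pr)) (R : rhs CD Fn Pr)
  (N M : NN) (P Q : PP) (u v w : W) (t : T).

Lemma act_tinst_R : forall G D O R t,
  act (ntshift_ctx G) (ntshift_ctx D) (ptshift_ctx O) R ->
  act G D O (rsub (scons t (@TVar Fn)) (@WVar CD) R).
Proof.
  intros. apply (act_sub (scons t (@TVar Fn)) (@WVar CD)) in H.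
  rewrite !ntshift_ctx_eq, ptshift_ctx_eq, !nhs_comp, phs_comp, tinst_tsh, wsub_wvar_r in H.
  rewrite !nhs_id, phs_id in H. exact H.
Qed.
Lemma act_winst_R : forall G D O R v,
  act (nwshift_ctx G) (nwshift_ctx D) (pwshift_ctx O) R ->
  act G D O (rsub (@TVar Fn) (scons v (@WVar CD)) R).
Proof.
  intros. apply (act_sub (@TVar Fn) (scons v (@WVar CD))) in H.
  rewrite !nwshift_ctx_eq, pwshift_ctx_eq, !nhs_comp, phs_comp, winst_wsh, tsub_tvar_r in H.
  rewrite !nhs_id, phs_id in H. exact H.
Qed.

Lemma rfoc_tshift : forall G D P w, rfoc G D P w -> rfoc (ntshift_ctx G) (ntshift_ctx D) (ptshift P) w.
Proof.
  intros. apply (rfoc_sub tsh (@WVar CD)) in H. rewrite !ntshift_ctx_eq.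
  rewrite wsub_id in H. exact H.
Qed.
Lemma rfoc_wshift : forall G D P w, rfoc G D P w -> rfoc (nwshift_ctx G) (nwshift_ctx D) (pwshift P) (wshift w).
Proof. intros. apply (rfoc_sub (@TVar Fn) wsh) in H. rewrite !nwshift_ctx_eq. exact H. Qed.

Lemma cs_stable : forall G D2' Q w p ts u D2 D1, act G D2' [] (RP Q w) ->
  Permutation D2' ((NNeg (PAtom p ts), u) :: D2) -> act G D1 [] (RP (PAtom p ts) u) ->
  act G (D1 ++ D2) [] (RP Q w).
Proof.
  intros. eapply st_top; eauto. unfold Kont; intros.
  cbn in H3. destruct (rinv_atom H3 eq_refl) as [u0 [Hp [Hw Hpol]]].
  eapply a_perm; [ apply Permutation_app_tail; symmetry; eauto | apply Permutation_refl | ].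
  simpl. apply aw2 with (u := wsub sw u); auto.
  apply act_weak with (G := map (nhs st sw) G); auto.
  apply (act_sub st sw) in H. eapply a_perm; [ | apply Permutation_refl | exact H].
  apply (Permutation_map (nhs st sw)) in H0. exact H0.
Qed.

Lemma cs_gen : forall G D2' O R, act G D2' O R -> forall p ts u D2 D1,
  Permutation D2' ((NNeg (PAtom p ts), u) :: D2) -> act G D1 [] (RP (PAtom p ts) u) ->
  act G (D1 ++ D2) O R.
Proof.
  induction 1; intros.
  - eapply a_perm; [apply Permutation_refl | eauto | ]. eapply IHact; eauto. eapply perm_trans; eauto.
  - apply a_tensorL; eauto.
  - apply a_oneL; eauto.
  - apply a_plusL; eauto.
  - apply a_downLA; eauto.
  - apply a_atLA; eauto.
  - apply a_exTL. rewrite ntshift_ctx_app. eapply IHact.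
    + apply (Permutation_map (nhs tsh (@WVar CD))) in H0. simpl in H0.
      rewrite ?wsub_id in H0. rewrite !ntshift_ctx_eq. exact H0.
    + apply act_tshift in H1. exact H1.
  - apply a_exWL. rewrite nwshift_ctx_app. eapply IHact.
    + apply (Permutation_map (nhs (@TVar Fn) wsh)) in H0. simpl in H0.
      rewrite !nwshift_ctx_eq. exact H0.
    + apply act_wshift in H1. exact H1.
  - apply a_bangL. eapply IHact; eauto. eapply act_weak; eauto. intros z Hz; right; auto.
  - apply a_posL. eapply a_perm; [apply Yperm | apply Permutation_refl | ]. eapply IHact; eauto. apply perm_cons2; auto.
  - apply a_lp; auto. eapply a_perm; [apply Yperm | apply Permutation_refl | ]. eapply IHact; eauto. apply perm_cons2; auto.
  - apply a_zeroL.
  - apply a_withR; eauto.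
  - apply a_topR.
  - apply a_lolliR; eauto.
  - apply a_downRA; eauto.
  - apply a_atRA; eauto.
  - apply a_allTR. rewrite ntshift_ctx_app. eapply IHact.
    + apply (Permutation_map (nhs tsh (@WVar CD))) in H0. simpl in H0.
      rewrite ?wsub_id in H0. rewrite !ntshift_ctx_eq. exact H0.
    + apply act_tshift in H1. exact H1.
  - apply a_allWR. rewrite nwshift_ctx_app. eapply IHact.
    + apply (Permutation_map (nhs (@TVar Fn) wsh)) in H0. simpl in H0.
      rewrite !nwshift_ctx_eq. exact H0.
    + apply act_wshift in H1. exact H1.
  - apply a_negR; eauto.
  - apply a_rp; eauto.
  - eapply cs_stable; eauto. apply a_lf; auto.
  - eapply cs_stable; eauto. eapply a_cplf; eauto.
  - eapply cs_stable; eauto. apply a_rf; auto.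
Qed.

End Cut1.

Section Cut2.
Context {CD : constraint_domain} {Fn Pr : Type}.
Variable pol : Pr -> bool.
Local Notation T := (term Fn).
Local Notation W := (wexp CD).
Local Notation PP := (pprop CD Fn Pr).
Local Notation NN := (nprop CD Fn Pr).
Local Notation act := (act pol).
Local Notation lfoc := (lfoc pol).
Local Notation rfoc := (rfoc pol).
Local Notation nh := (nhyp CD Fn Pr).
Implicit Types (G D X Y E : list nh) (O : list (phyp CD Fn Pr)) (R : rhs CD Fn Pr)
  (N M : NN) (P Q : PP) (u v w : W) (t : T).

Definition CP_at n := forall G D1 D2 P u O R, psize P = n -> rfoc G D1 P u ->
  act G D2 ((P, u) :: O) R -> act G (D1 ++ D2) O R.
Definition CNP_le n := forall G D1 D2 N u Q w, nsize N <= n -> act G D1 [] (RN N u) ->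
  lfoc G D2 N u Q w -> act G (D1 ++ D2) [] (RP Q w).
Definition CN_at n := forall G D1 D2 N u O R, nsize N = n -> act G D1 [] (RN N u) ->
  act G ((N, u) :: D2) O R -> act G (D1 ++ D2) O R.
Definition CG_at n := forall G N u D O R, nsize N = n -> act G [] [] (RN N u) ->
  act ((N, u) :: G) D O R -> act G D O R.

Lemma cnp_step : forall n, (forall m, m < n -> CP_at m) -> CNP_le n.
Proof.
  intros n IH G D1 D2 N u Q w Hs H1 H2. unfold CP_at in IH. revert D1 H1 Hs. induction H2; intros.
  - eapply a_perm; [apply Permutation_app_head; eauto | apply Permutation_refl | eauto].
  - eapply invR_rp in H1; eauto. rewrite app_nil_r. eapply aw1; eauto.
  - eapply invR_neg in H1; eauto. eapply st_top; eauto. unfold Kont; intros.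
    eapply (IH (psize P)) with (P := ppsub st sw P) (u := wsub sw u); [simpl in Hs; lia | rewrite psize_sub; auto | eauto | ].
    apply act_weak with (G := map (nhs st sw) G); auto. apply (act_sub st sw) in H. exact H.
  - eapply invR_with in H1; eauto. destruct H1. apply IHlfoc; auto. simpl in Hs; lia.
  - eapply invR_with in H1; eauto. destruct H1. apply IHlfoc; auto. simpl in Hs; lia.
  - eapply invR_lolli in H1; eauto. simpl in Hs.
    eapply (IH (psize P)) in H1; [ | lia | reflexivity | eauto].
    eapply a_perm; [ | apply Permutation_refl | apply IHlfoc; [exact H1 | lia]].
    rewrite <- app_assoc. rewrite !app_assoc. apply Permutation_app_tail. apply Permutation_app_comm.
  - eapply invR_allT in H1; eauto. eapply act_tinst_R with (t := t) (O := []) in H1. simpl in H1. rewrite wsub_id in H1.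
    apply IHlfoc; auto. unfold ntinst; rewrite nsize_sub; simpl in Hs; lia.
  - eapply invR_allW in H1; eauto. eapply act_winst_R with (v := v) (O := []) in H1. simpl in H1. rewrite w_inst_shift in H1.
    apply IHlfoc; auto. unfold nwinst; rewrite nsize_sub; simpl in Hs; lia.
  - eapply invR_down in H1; eauto. apply IHlfoc; auto. unfold nwinst; rewrite nsize_sub; simpl in Hs; lia.
  - eapply invR_at in H1; eauto. apply IHlfoc; auto. simpl in Hs; lia.
Qed.

Definition notNA (N : NN) := forall p ts, N <> NNeg (PAtom p ts).
Lemma notNA_sub : forall N st sw, notNA N -> notNA (npsub st sw N).
Proof.
  unfold notNA; intros N st sw H p ts E. destruct N as [ | | | | | | | | P0]; cbn in E; try discriminate.
  destruct P0; cbn in E; try discriminate.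
  injection E; intros; subst. eapply H; eauto.
Qed.

Definition Phi_cn n (G : list nh) (x : nh) (Y : list nh) : Prop :=
  exists N u, x = (N, u) /\ notNA N /\ nsize N <= n /\ act G Y [] (RN N u).

Lemma cn_step : forall n, CNP_le n -> CN_at n.
Proof.
  intros n Hc G D1 D2 N u O R Hs H1 H2.
  destruct (classic (notNA N)) as [HN|HN].
  - change (act G (D1 ++ D2) O R).
    eapply (proj1 (hyp_repl (pol := pol) (Phi_cn n) _ _ _ _)); eauto.
    + exists N, u; repeat split; auto. lia.
    Unshelve.
    * intros G0 x Y st sw [N0 [u0 [-> [? [? ?]]]]]. exists (npsub st sw N0), (wsub sw u0); repeat split.
      apply notNA_sub; auto. rewrite nsize_sub; auto. apply (act_sub st sw) in H3. exact H3.
    * intros G0 G1 x Y [N0 [u0 [-> [? [? ?]]]]] Hi. exists N0, u0; repeat split; auto. eapply act_weak; eauto.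
    * intros G0 N0 u0 Y Dl Q w [N1 [u1 [E [? [? ?]]]]] Hn Hl. injection E; intros; subst. eapply Hc; eauto.
    * intros G0 p ts u0 Y w [N1 [u1 [E [? [? ?]]]]]. injection E; intros; subst. exfalso; eapply H; eauto.
  - unfold notNA in HN. apply not_all_ex_not in HN; destruct HN as [p HN].
    apply not_all_ex_not in HN; destruct HN as [ts HN]. apply NNPP in HN; subst.
    eapply invR_neg in H1; eauto. eapply cs_gen; eauto.
Qed.


Lemma incl_cons_cons : forall A (a b : A) l l', incl l (a :: l') -> incl (b :: l) (a :: b :: l').
Proof. intros A a b l l' H z [E|E]; [subst; right; left; auto | destruct (H z E); [left|right; right]; auto]. Qed.

Lemma incl_tshift : forall G' G N u, incl G' ((N, u) :: G) ->
  incl (ntshift_ctx G') ((ntshift N, u) :: ntshift_ctx G).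
Proof. intros. change ((ntshift N, u) :: ntshift_ctx G) with (ntshift_ctx ((N, u) :: G)). apply incl_map'; auto. Qed.
Lemma incl_wshift : forall G' G N u, incl G' ((N, u) :: G) ->
  incl (nwshift_ctx G') ((nwshift N, wshift u) :: nwshift_ctx G).
Proof. intros. change ((nwshift N, wshift u) :: nwshift_ctx G) with (nwshift_ctx ((N, u) :: G)). apply incl_map'; auto. Qed.
Lemma nsize_tshift : forall N, nsize (ntshift N) = nsize N.
Proof. intros; apply nsize_sub. Qed.
Lemma nsize_wshift : forall N, nsize (nwshift N) = nsize N.
Proof. intros; apply nsize_sub. Qed.

Lemma cg_all : forall n, CNP_le n ->
  (forall G' D O R, act G' D O R -> forall G N u, incl G' ((N, u) :: G) -> nsize N <= n ->
     act G [] [] (RN N u) -> act G D O R) /\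
  (forall G' D M v Q w, lfoc G' D M v Q w -> forall G N u, incl G' ((N, u) :: G) -> nsize N <= n ->
     act G [] [] (RN N u) -> lfoc G D M v Q w) /\
  (forall G' D P w, rfoc G' D P w -> forall G N u, incl G' ((N, u) :: G) -> nsize N <= n ->
     act G [] [] (RN N u) -> rfoc G D P w).
Proof.
  intros n Hc. apply foc_mind; intros; try solve [econstructor; eauto].
  - apply a_exTL. eapply H; [apply incl_tshift; eauto | rewrite nsize_tshift; auto | apply act_tshift in H2; exact H2].
  - apply a_exWL. eapply H; [apply incl_wshift; eauto | rewrite nsize_wshift; auto | apply act_wshift in H2; exact H2].
  - apply a_bangL. eapply H; [apply incl_cons_cons; eauto | auto | eapply act_weak; eauto; intros z Hz; right; auto].
  - apply a_allTR. eapply H; [apply incl_tshift; eauto | rewrite nsize_tshift; auto | apply act_tshift in H2; exact H2].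
  - apply a_allWR. eapply H; [apply incl_wshift; eauto | rewrite nsize_wshift; auto | apply act_wshift in H2; exact H2].
  - destruct (H0 _ i) as [E|E].
    + injection E; intros; subst. change (act G0 ([] ++ D) [] (RP Q w)). eapply Hc; eauto.
    + eapply a_cplf; eauto.
Qed.

Lemma cg_step : forall n, CNP_le n -> CG_at n.
Proof. intros n Hc G N u D O R Hs H1 H2. eapply (proj1 (cg_all Hc)); eauto. apply incl_refl. lia. Qed.


Lemma perm_pre : forall A (pre O l : list A) x, Permutation O (x :: l) ->
  Permutation (pre ++ O) (x :: pre ++ l).
Proof. intros. rewrite H. symmetry; apply Permutation_middle. Qed.

Lemma cp_inner : forall n, (forall m, m < n -> CG_at m /\ CN_at m /\ CP_at m) ->
  forall G D O' R, act G D O' R -> forall Pc uc Oc Dc, psize Pc = n ->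
    Permutation O' ((Pc, uc) :: Oc) -> rfoc G Dc Pc uc -> act G (Dc ++ D) Oc R.
Proof.
  intros n IH. assert (CP : forall m, m < n -> CP_at m) by (intros; apply IH; auto).
  assert (CN : forall m, m < n -> CN_at m) by (intros; apply IH; auto).
  assert (CG : forall m, m < n -> CG_at m) by (intros; apply IH; auto).
  clear IH. unfold CP_at, CN_at, CG_at in *.
  induction 1; intros Pc uc Oc Dc Hs Hp Hr;
  try (destruct (perm_cons_cases Hp) as [[E Hp']|[l [Hp1 Hp2]]];
       [injection E; intros; subst Pc uc | ]).
  - eapply a_perm; [apply Permutation_app_head; eauto | apply Permutation_refl | ].
    eapply IHact; eauto. eapply perm_trans; eauto.
  -
    destruct (rinv_tensor Hr eq_refl) as [Da [Db [HD [Ha Hb]]]]. simpl in Hs.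
    eapply (CP (psize P)) in H; [ | lia | reflexivity | exact Ha].
    eapply (CP (psize Q)) in H; [ | lia | reflexivity | exact Hb].
    eapply a_perm; [ | exact Hp' | exact H].
    rewrite HD, app_assoc. apply Permutation_app_tail. apply Permutation_app_comm.
  - eapply a_perm; [apply Permutation_refl | symmetry; exact Hp2 | ]. apply a_tensorL.
    eapply IHact; eauto. apply (perm_pre [(P, u); (Q, u)]); auto.
  -
    pose proof (rinv_one Hr eq_refl). eapply a_perm; [ | exact Hp' | exact H].
    rewrite H0; auto.
  - eapply a_perm; [apply Permutation_refl | symmetry; exact Hp2 | ]. apply a_oneL. eapply IHact; eauto.
  - simpl in Hs.
    destruct (rinv_plus Hr eq_refl) as [Ha|Ha].
    + eapply (CP (psize P)) in H; [ | lia | reflexivity | exact Ha]. eapply a_perm; [apply Permutation_refl | exact Hp' | exact H].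
    + eapply (CP (psize Q)) in H0; [ | lia | reflexivity | exact Ha]. eapply a_perm; [apply Permutation_refl | exact Hp' | exact H0].
  - eapply a_perm; [apply Permutation_refl | symmetry; exact Hp2 | ]. apply a_plusL.
    + eapply IHact1; eauto. apply (perm_pre [(P, u)]); auto.
    + eapply IHact2; eauto. apply (perm_pre [(Q, u)]); auto.
  - simpl in Hs. pose proof (rinv_down Hr eq_refl).
    eapply (CP (psize P)) in H; [ | lia | unfold pwinst; rewrite psize_sub; auto | exact H0].
    eapply a_perm; [apply Permutation_refl | exact Hp' | exact H].
  - eapply a_perm; [apply Permutation_refl | symmetry; exact Hp2 | ]. apply a_downLA.
    eapply IHact; eauto. apply (perm_pre [(pwinst v P, v)]); auto.
  - simpl in Hs. pose proof (rinv_at Hr eq_refl).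
    eapply (CP (psize P)) in H; [ | lia | reflexivity | exact H0].
    eapply a_perm; [apply Permutation_refl | exact Hp' | exact H].
  - eapply a_perm; [apply Permutation_refl | symmetry; exact Hp2 | ]. apply a_atLA.
    eapply IHact; eauto. apply (perm_pre [(P, u)]); auto.
  - simpl in Hs. destruct (rinv_exT Hr eq_refl) as [t Ht].
    apply act_tinst with (t := t) in H.
    eapply (CP (psize P)) in H; [ | lia | unfold ptinst; rewrite psize_sub; auto | exact Ht].
    eapply a_perm; [apply Permutation_refl | exact Hp' | exact H].
  - eapply a_perm; [apply Permutation_refl | symmetry; exact Hp2 | ]. apply a_exTL.
    rewrite ntshift_ctx_app. eapply IHact with (Pc := ptshift Pc).
    + unfold ptshift; rewrite psize_sub; auto.
    + apply (perm_pre [(P, u)]). apply (Permutation_map (fun h => (ptshift (fst h), snd h))) in Hp1. exact Hp1.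
    + apply rfoc_tshift; auto.
  - simpl in Hs. destruct (rinv_exW Hr eq_refl) as [v Hv].
    apply act_winst with (v := v) in H.
    eapply (CP (psize P)) in H; [ | lia | unfold pwinst; rewrite psize_sub; auto | exact Hv].
    eapply a_perm; [apply Permutation_refl | exact Hp' | exact H].
  - eapply a_perm; [apply Permutation_refl | symmetry; exact Hp2 | ]. apply a_exWL.
    rewrite nwshift_ctx_app. eapply IHact with (Pc := pwshift Pc).
    + unfold pwshift; rewrite psize_sub; auto.
    + apply (perm_pre [(P, wshift u)]). apply (Permutation_map (fun h => (pwshift (fst h), wshift (snd h)))) in Hp1. exact Hp1.
    + apply rfoc_wshift; auto.
  - simpl in Hs. destruct (rinv_bang Hr eq_refl) as [HD HN].
    eapply (CG (nsize N)) in H; [ | lia | reflexivity | exact HN].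
    eapply a_perm; [ | exact Hp' | exact H]. rewrite HD; auto.
  - eapply a_perm; [apply Permutation_refl | symmetry; exact Hp2 | ]. apply a_bangL.
    eapply IHact; eauto. eapply rfoc_weak; eauto. intros z Hz; right; auto.
  - simpl in Hs. pose proof (rinv_pos Hr eq_refl).
    eapply (CN (nsize N)) in H; [ | lia | reflexivity | exact H0].
    eapply a_perm; [apply Permutation_refl | exact Hp' | exact H].
  - eapply a_perm; [apply Permutation_refl | symmetry; exact Hp2 | ]. apply a_posL.
    eapply a_perm; [apply Yperm | apply Permutation_refl | ]. eapply IHact; eauto.
  - destruct (rinv_atom Hr eq_refl) as [u0 [HD [Hw _]]].
    eapply aw2 in H0; [ | exact Hw].
    eapply a_perm; [ | exact Hp' | exact H0]. rewrite HD; auto.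
  - eapply a_perm; [apply Permutation_refl | symmetry; exact Hp2 | ]. apply a_lp; auto.
    eapply a_perm; [apply Yperm | apply Permutation_refl | ]. eapply IHact; eauto.
  - exfalso; eapply rinv_zero; eauto.
  - eapply a_perm; [apply Permutation_refl | symmetry; exact Hp2 | ]. apply a_zeroL.
  - apply a_withR; eauto.
  - apply a_topR.
  - apply a_lolliR. eapply IHact; eauto. apply (perm_pre [(P, w)]); auto.
  - apply a_downRA; eauto.
  - apply a_atRA; eauto.
  - apply a_allTR. rewrite ntshift_ctx_app. eapply IHact with (Pc := ptshift Pc).
    + unfold ptshift; rewrite psize_sub; auto.
    + apply (Permutation_map (fun h => (ptshift (fst h), snd h))) in Hp. exact Hp.
    + apply rfoc_tshift; auto.
  - apply a_allWR. rewrite nwshift_ctx_app. eapply IHact with (Pc := pwshift Pc).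
    + unfold pwshift; rewrite psize_sub; auto.
    + apply (Permutation_map (fun h => (pwshift (fst h), wshift (snd h)))) in Hp. exact Hp.
    + apply rfoc_wshift; auto.
  - apply a_negR; eauto.
  - apply a_rp; eauto.
  - apply Permutation_nil in Hp; discriminate.
  - apply Permutation_nil in Hp; discriminate.
  - apply Permutation_nil in Hp; discriminate.
Qed.

Lemma cp_step : forall n, (forall m, m < n -> CG_at m /\ CN_at m /\ CP_at m) -> CP_at n.
Proof. intros n IH G D1 D2 P u O R Hs Hr H. eapply cp_inner; eauto. Qed.

Lemma cut_all : forall n, CNP_le n /\ CN_at n /\ CG_at n /\ CP_at n.
Proof.
  induction n as [n IHn] using (well_founded_induction Wf_nat.lt_wf).
  assert (Hnp : CNP_le n) by (apply cnp_step; intros; apply IHn; auto).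
  repeat split; auto.
  - apply cn_step; auto.
  - apply cg_step; auto.
  - apply cp_step; intros m Hm; destruct (IHn m Hm) as [? [? [? ?]]]; auto.
Qed.

End Cut2.

Section Ident.
Context {CD : constraint_domain} {Fn Pr : Type}.
Variable pol : Pr -> bool.
Local Notation T := (term Fn).
Local Notation W := (wexp CD).
Local Notation PP := (pprop CD Fn Pr).
Local Notation NN := (nprop CD Fn Pr).
Local Notation act := (act pol).
Local Notation lfoc := (lfoc pol).
Local Notation rfoc := (rfoc pol).
Local Notation nh := (nhyp CD Fn Pr).
Implicit Types (G D X Y E : list nh) (O : list (phyp CD Fn Pr)) (R : rhs CD Fn Pr)
  (N M : NN) (P Q : PP) (u v w : W) (t : T).

Ltac subfix := apply functional_extensionality; intros [|?]; simpl;
  unfold up_t, up_w; simpl;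
  rewrite ?tsub_comp, ?wsub_comp; simpl; rewrite ?tsub_id, ?wsub_id; auto;
  try (symmetry; apply tsub_id); try (symmetry; apply wsub_id).

Definition KN G N u D : Prop :=
  forall st sw G' Dx Q w, incl (map (nhs st sw) G) G' ->
    lfoc G' Dx (npsub st sw N) (wsub sw u) Q w -> act G' (Dx ++ map (nhs st sw) D) [] (RP Q w).
Definition KP G P u D O R : Prop :=
  forall st sw G' Dx, incl (map (nhs st sw) G) G' ->
    rfoc G' Dx (ppsub st sw P) (wsub sw u) ->
    act G' (Dx ++ map (nhs st sw) D) (map (phs st sw) O) (rsub st sw R).

Lemma KN_id : forall G N u D Dx Q w, KN G N u D -> lfoc G Dx N u Q w -> act G (Dx ++ D) [] (RP Q w).
Proof.
  intros. specialize (H (@TVar Fn) (@WVar CD) G Dx Q w). rewrite !nhs_id, np_id, wsub_id in H.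
  apply H; auto. apply incl_refl.
Qed.
Lemma KP_id : forall G P u D O R Dx, KP G P u D O R -> rfoc G Dx P u -> act G (Dx ++ D) O R.
Proof.
  intros. specialize (H (@TVar Fn) (@WVar CD) G Dx). rewrite !nhs_id, phs_id, rsub_id, pp_id, wsub_id in H.
  apply H; auto. apply incl_refl.
Qed.

Lemma incl_comp : forall st1 sw1 st2 sw2 G G' G'',
  incl (map (nhs st1 sw1) G) G' -> incl (map (nhs st2 sw2) G') G'' ->
  incl (map (nhs (fun n => tsub st2 (st1 n)) (fun n => wsub sw2 (sw1 n))) G) G''.
Proof. intros. rewrite <- nhs_comp. eapply incl_tran; [apply incl_map'; eauto | auto]. Qed.

Lemma tinst_up : forall st sw N,
  ntinst (st 0) (npsub (up_t (fun n => tsub st (tsh n))) (fun n => wsub sw (WVar n)) N) = npsub st sw N.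
Proof. intros; unfold ntinst; rewrite np_comp; f_equal; subfix. Qed.
Lemma tinst_up_p : forall st sw P,
  ptinst (st 0) (ppsub (up_t (fun n => tsub st (tsh n))) (fun n => wsub sw (WVar n)) P) = ppsub st sw P.
Proof. intros; unfold ptinst; rewrite pp_comp; f_equal; subfix. Qed.
Lemma winst_up : forall st sw N,
  nwinst (sw 0) (npsub (fun n => tsub st (TVar n)) (up_w (fun n => wsub sw (wsh n))) N) = npsub st sw N.
Proof. intros; unfold nwinst; rewrite np_comp; f_equal; subfix. Qed.
Lemma winst_up_p : forall st sw P,
  pwinst (sw 0) (ppsub (fun n => tsub st (TVar n)) (up_w (fun n => wsub sw (wsh n))) P) = ppsub st sw P.
Proof. intros; unfold pwinst; rewrite pp_comp; f_equal; subfix. Qed.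

Lemma rf_any : forall G D P u, rfoc G D P u -> act G D [] (RP P u).
Proof.
  intros. destruct (classic (exists n ts, P = PPos (NAtom n ts))) as [[n [ts E]]|HP].
  - subst. pose proof (rinv_pos H eq_refl). eapply invR_rp; eauto.
  - apply a_rf; auto. intros n ts E; apply HP; eauto.
Qed.


Lemma wf_sub :
  (forall P st sw, pwf pol P -> pwf pol (ppsub st sw P)) /\
  (forall N st sw, nwf pol N -> nwf pol (npsub st sw N)).
Proof. apply pn_ind; intros; simpl in *; intuition. Qed.
Lemma pwf_sub : forall P st sw, pwf pol P -> pwf pol (ppsub st sw P). Proof. apply wf_sub. Qed.
Lemma nwf_sub : forall N st sw, nwf pol N -> nwf pol (npsub st sw N). Proof. apply wf_sub. Qed.

Lemma KP_gen : forall G P u D O R G' Dx, KP G P u D O R -> incl G G' -> rfoc G' Dx P u -> act G' (Dx ++ D) O R.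
Proof.
  intros. specialize (H (@TVar Fn) (@WVar CD) G' Dx). rewrite !nhs_id, phs_id, rsub_id, pp_id, wsub_id in H.
  apply H; auto.
Qed.

Ltac KNcomp H st sw st2 sw2 :=
  specialize (H (fun n => tsub st2 (st n)) (fun n => wsub sw2 (sw n))).

Lemma ident : forall n,
  (forall N, nsize N <= n -> nwf pol N -> forall G D u, KN G N u D -> act G D [] (RN N u)) /\
  (forall P, psize P <= n -> pwf pol P -> forall G D O R u, KP G P u D O R -> act G D ((P, u) :: O) R).
Proof.
  induction n as [|n [IHN IHP]].
  - split; intros; [destruct N | destruct P]; simpl in H; lia.
  - split.
    + intros N Hs Hw G D u HK. destruct N; simpl in Hs, Hw.
      * apply a_rp; auto. change (act G ([] ++ D) [] (RP (PPos (NAtom n0 ts)) u)).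
        eapply KN_id; eauto. apply l_li; auto. apply weq_refl.
      * destruct Hw. apply a_withR; apply IHN; auto; try lia; unfold KN; intros.
        -- apply HK; auto. cbn. apply l_withL1; auto.
        -- apply HK; auto. cbn. apply l_withL2; auto.
      * apply a_topR.
      * destruct Hw as [HwP HwN]. apply a_lolliR. apply IHP; auto; try lia.
        unfold KP; intros st sw G' Dx Hi Hr. cbn [map rsub].
        apply IHN; [rewrite nsize_sub; lia | apply nwf_sub; auto | ].
        unfold KN; intros st2 sw2 G'' Dy Q w Hi2 Hl.
        specialize (HK (fun n => tsub st2 (st n)) (fun n => wsub sw2 (sw n)) G'' (map (nhs st2 sw2) Dx ++ Dy) Q w).
        eapply a_perm; [ | apply Permutation_refl | apply HK ].
        -- rewrite map_app, nhs_comp. rewrite !app_assoc. apply Permutation_app_tail. apply Permutation_app_comm.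
        -- eapply incl_comp; eauto.
        -- cbn. apply l_lolliL.
           ++ apply (rfoc_sub st2 sw2) in Hr. rewrite pp_comp, wsub_comp in Hr. eapply rfoc_weak; eauto.
           ++ rewrite np_comp, wsub_comp in Hl. exact Hl.
      * apply a_allTR. apply IHN; auto; try lia.
        unfold KN; intros st sw G' Dx Q w Hi Hl.
        specialize (HK (fun n => tsub st (tsh n)) (fun n => wsub sw (WVar n)) G' Dx Q w).
        rewrite ntshift_ctx_eq, nhs_comp. apply HK.
        -- rewrite ntshift_ctx_eq, nhs_comp in Hi. exact Hi.
        -- apply l_allTL with (t := st 0). rewrite tinst_up. rewrite wsub_wvar_r. exact Hl.
      * apply a_allWR. apply IHN; auto; try lia.
        unfold KN; intros st sw G' Dx Q w Hi Hl.
        specialize (HK (fun n => tsub st (TVar n)) (fun n => wsub sw (wsh n)) G' Dx Q w).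
        rewrite nwshift_ctx_eq, nhs_comp. apply HK.
        -- rewrite nwshift_ctx_eq, nhs_comp in Hi. exact Hi.
        -- apply l_allWL with (v := sw 0). rewrite winst_up.
           unfold wshift in Hl. rewrite wsub_comp in Hl. exact Hl.
      * apply a_downRA. apply IHN; [unfold nwinst; rewrite nsize_sub; lia | unfold nwinst; apply nwf_sub; auto | ].
        unfold KN; intros st sw G' Dx Q w Hi Hl. apply HK; auto. cbn. apply l_downLF.
        rewrite np_winst in Hl. exact Hl.
      * apply a_atRA. apply IHN; auto; try lia.
        unfold KN; intros st sw G' Dx Q0 w0 Hi Hl. apply HK; auto. cbn. apply l_atLF. exact Hl.
      * apply a_negR. change (act G ([] ++ D) [] (RP P u)). eapply KN_id; eauto.
        apply l_negL. apply IHP; auto; try lia.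
        unfold KP; intros st sw G' Dx Hi Hr. cbn [map rsub]. rewrite app_nil_r. apply rf_any; auto.
    + intros P Hs Hw G D O R u HK. destruct P; simpl in Hs, Hw.
      * apply a_lp; auto.
        change ((NNeg (PAtom p ts), u) :: D) with ([(NNeg (PAtom p ts), u)] ++ D).
        eapply KP_id; eauto. apply r_ri; auto. apply weq_refl.
      * destruct Hw as [Hw1 Hw2]. apply a_tensorL. apply IHP; auto; try lia.
        unfold KP; intros st sw G' Dx Hi Hr. cbn [map phs fst snd].
        apply IHP; [rewrite psize_sub; lia | apply pwf_sub; auto | ].
        unfold KP; intros st2 sw2 G'' Dy Hi2 Hr2.
        specialize (HK (fun n => tsub st2 (st n)) (fun n => wsub sw2 (sw n)) G'' (map (nhs st2 sw2) Dx ++ Dy)).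
        rewrite phs_comp, rsub_comp.
        eapply a_perm; [ | apply Permutation_refl | apply HK ].
        -- rewrite map_app, nhs_comp. rewrite !app_assoc. apply Permutation_app_tail. apply Permutation_app_comm.
        -- eapply incl_comp; eauto.
        -- cbn. apply r_tensorR.
           ++ apply (rfoc_sub st2 sw2) in Hr. rewrite pp_comp, wsub_comp in Hr. eapply rfoc_weak; eauto.
           ++ rewrite pp_comp, wsub_comp in Hr2. exact Hr2.
      * apply a_oneL. change (act G ([] ++ D) O R). eapply KP_id; eauto. apply r_oneR.
      * destruct Hw as [Hw1 Hw2]. apply a_plusL; apply IHP; auto; try lia;
        unfold KP; intros st sw G' Dx Hi Hr; apply HK; auto; cbn; [apply r_plusR1 | apply r_plusR2]; auto.
      * apply a_zeroL.
      * apply a_bangL. change (act ((N, u) :: G) ([] ++ D) O R).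
        eapply KP_gen; eauto. { intros z Hz; right; auto. }
        apply r_bangR. apply IHN; auto; try lia.
        unfold KN; intros st sw G' Dx Q w Hi Hl. rewrite app_nil_r. eapply a_cplf; eauto.
        apply Hi. left; reflexivity.
      * apply a_exTL. apply IHP; auto; try lia.
        unfold KP; intros st sw G' Dx Hi Hr.
        specialize (HK (fun n => tsub st (tsh n)) (fun n => wsub sw (WVar n)) G' Dx).
        rewrite ntshift_ctx_eq, ptshift_ctx_eq, rhs_tshift_eq, nhs_comp, phs_comp, rsub_comp. apply HK.
        -- rewrite ntshift_ctx_eq, nhs_comp in Hi. exact Hi.
        -- apply r_exTR with (t := st 0). rewrite tinst_up_p. rewrite wsub_wvar_r. exact Hr.
      * apply a_exWL. apply IHP; auto; try lia.
        unfold KP; intros st sw G' Dx Hi Hr.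
        specialize (HK (fun n => tsub st (TVar n)) (fun n => wsub sw (wsh n)) G' Dx).
        rewrite nwshift_ctx_eq, pwshift_ctx_eq, rhs_wshift_eq, nhs_comp, phs_comp, rsub_comp. apply HK.
        -- rewrite nwshift_ctx_eq, nhs_comp in Hi. exact Hi.
        -- apply r_exWR with (v := sw 0). rewrite winst_up_p.
           unfold wshift in Hr. rewrite wsub_comp in Hr. exact Hr.
      * apply a_downLA. apply IHP; [unfold pwinst; rewrite psize_sub; lia | unfold pwinst; apply pwf_sub; auto | ].
        unfold KP; intros st sw G' Dx Hi Hr. apply HK; auto. cbn. apply r_downRF.
        rewrite pp_winst in Hr. exact Hr.
      * apply a_atLA. apply IHP; auto; try lia.
        unfold KP; intros st sw G' Dx Hi Hr. apply HK; auto. cbn. apply r_atRF. exact Hr.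
      * apply a_posL. change ((N, u) :: D) with ([(N, u)] ++ D). eapply KP_id; eauto.
        apply r_posR. apply IHN; auto; try lia.
        unfold KN; intros st sw G' Dx Q w Hi Hl. cbn [map nhs fst snd].
        eapply a_perm; [ | apply Permutation_refl | apply focus_hyp; eauto ].
        apply Permutation_cons_append.
Qed.

End Ident.

Section Derived.
Context {CD : constraint_domain} {Fn Pr : Type}.
Variable pol : Pr -> bool.
Local Notation T := (term Fn).
Local Notation W := (wexp CD).
Local Notation PP := (pprop CD Fn Pr).
Local Notation NN := (nprop CD Fn Pr).
Local Notation act := (act pol).
Local Notation lfoc := (lfoc pol).
Local Notation rfoc := (rfoc pol).
Local Notation nh := (nhyp CD Fn Pr).
Implicit Types (G D X Y E : list nh) (O : list (phyp CD Fn Pr)) (R : rhs CD Fn Pr)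
  (N M : NN) (P Q : PP) (u v w : W) (t : T).

Lemma EN : forall N G D u, nwf pol N -> KN pol G N u D -> act G D [] (RN N u).
Proof. intros. eapply (proj1 (ident pol (nsize N))); eauto. Qed.
Lemma EP : forall P G D O R u, pwf pol P -> KP pol G P u D O R -> act G D ((P, u) :: O) R.
Proof. intros. eapply (proj2 (ident pol (psize P))); eauto. Qed.

Lemma CNall : forall G D1 D2 N u O R, act G D1 [] (RN N u) -> act G ((N, u) :: D2) O R ->
  act G (D1 ++ D2) O R.
Proof. intros. eapply (proj1 (proj2 (cut_all pol (nsize N)))); eauto. Qed.
Lemma CPall : forall G D1 D2 P u O R, rfoc G D1 P u -> act G D2 ((P, u) :: O) R -> act G (D1 ++ D2) O R.
Proof. intros. eapply (proj2 (proj2 (proj2 (cut_all pol (psize P))))); eauto. Qed.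

Lemma act_sw : forall G D O R st sw G', act G D O R -> incl (map (nhs st sw) G) G' ->
  act G' (map (nhs st sw) D) (map (phs st sw) O) (rsub st sw R).
Proof. intros. eapply act_weak; eauto. apply act_sub; auto. Qed.

Lemma copy_id : forall G N u, nwf pol N -> In (N, u) G -> act G [] [] (RN N u).
Proof.
  intros. apply EN; auto. unfold KN; intros. rewrite app_nil_r. simpl. eapply a_cplf; eauto.
  apply H1. apply in_map_iff. exists (N, u); auto.
Qed.

Lemma IdP : forall G P u, pwf pol P -> act G [] [(P, u)] (RP P u).
Proof.
  intros. apply EP; auto. unfold KP; intros. simpl. rewrite app_nil_r. apply rf_any; auto.
Qed.
Lemma IdNeg : forall G P u, pwf pol P -> act G [(NNeg P, u)] [] (RP P u).
Proof. intros. apply focus_hyp. apply l_negL. apply IdP; auto. Qed.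

Lemma DO : forall G D O R P u, pwf pol P -> act G ((NNeg P, u) :: D) O R -> act G D ((P, u) :: O) R.
Proof.
  intros. apply EP; auto. unfold KP; intros st sw G' Dx Hi Hr.
  eapply act_sw in H0; eauto. simpl in H0.
  eapply CNall; [ | exact H0]. apply a_negR. apply rf_any; auto.
Qed.

Lemma st_unary : forall G D P u P' u', act G D [] (RP P u) ->
  (forall st sw G' Dz, rfoc G' Dz (ppsub st sw P) (wsub sw u) -> rfoc G' Dz (ppsub st sw P') (wsub sw u')) ->
  act G D [] (RP P' u').
Proof.
  intros. rewrite <- (app_nil_r D). eapply st_top; eauto. unfold Kont; intros.
  simpl. rewrite app_nil_r. apply rf_any. auto.
Qed.

Lemma st_tensor : forall G D1 D2 P1 P2 u, act G D1 [] (RP P1 u) -> act G D2 [] (RP P2 u) ->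
  act G (D1 ++ D2) [] (RP (PTensor P1 P2) u).
Proof.
  intros. eapply st_top; eauto. unfold Kont; intros st sw G' Dz Hi Hr.
  eapply act_sw in H0; eauto. simpl in H0.
  eapply a_perm; [apply Permutation_app_comm | apply Permutation_refl | ].
  eapply st_top; eauto. unfold Kont; intros st2 sw2 G'' Dy Hi2 Hr2.
  apply rf_any. eapply r_perm; [apply Permutation_app_comm | ]. cbn.
  apply r_tensorR; auto.
  apply (rfoc_sub st2 sw2) in Hr. eapply rfoc_weak; eauto.
Qed.

Lemma OD0 : forall G D P u N w, pwf pol P -> nwf pol N -> act G D [(P, u)] (RN N w) ->
  act G ((NNeg P, u) :: D) [] (RN N w).
Proof.
  intros G D P u N w HP HN H.
  set (F := NLolli (PAt P u) N).
  assert (H1 : act G D [] (RN F w)) by (apply a_lolliR; apply a_atLA; auto).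
  assert (H2 : act G [(NNeg P, u); (F, w)] [] (RN N w)).
  { apply EN; auto. unfold KN; intros st sw G' Dx Q w' Hi Hl. simpl.
    assert (S1 : act G' [(NNeg (ppsub st sw P), wsub sw u)] [] (RP (ppsub st sw P) (wsub sw u))).
    { apply IdNeg. apply pwf_sub; auto. }
    assert (S2 : act G' [(NNeg (ppsub st sw P), wsub sw u)] [] (RP (PAt (ppsub st sw P) (wsub sw u)) (wsub sw w))).
    { eapply st_unary; eauto. intros. cbn. apply r_atRF. auto. }
    eapply a_perm; [ | apply Permutation_refl | ].
    2: { change [(NNeg (ppsub st sw P), wsub sw u)] with ([(NNeg (ppsub st sw P), wsub sw u)] ++ []) in S2.
         eapply st_top with (E := Dx ++ [(npsub st sw F, wsub sw w)]) (Q := Q) (w := w'); [exact S2 | ].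
         unfold Kont; intros st2 sw2 G'' Dz Hi2 Hr2. simpl.
         eapply a_perm; [ | apply Permutation_refl | eapply a_lf ].
         3: { unfold F. cbn. eapply l_lolliL; [exact Hr2 | ]. apply (lfoc_sub st2 sw2) in Hl.
              eapply lfoc_weak; eauto. }
         2: { intros p ts Ee; discriminate. }
         rewrite map_app. simpl. rewrite app_assoc; apply Permutation_cons_append. }
    simpl. apply Permutation_middle. }
  eapply a_perm; [ | apply Permutation_refl | eapply CNall; [exact H1 | ] ].
  2: { eapply a_perm; [ | apply Permutation_refl | exact H2]. apply perm_swap. }
  symmetry; apply Permutation_cons_append.
Qed.

End Derived.

Section Main.
Context {CD : constraint_domain} {Fn Pr : Type}.
Variable pol : Pr -> bool.
Local Notation T := (term Fn).
Local Notation W := (wexp CD).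
Local Notation PP := (pprop CD Fn Pr).
Local Notation NN := (nprop CD Fn Pr).
Local Notation act := (act pol).
Local Notation lfoc := (lfoc pol).
Local Notation rfoc := (rfoc pol).
Local Notation nh := (nhyp CD Fn Pr).
Implicit Types (G D X Y E : list nh) (O : list (phyp CD Fn Pr)) (R : rhs CD Fn Pr)
  (N M : NN) (P Q : PP) (u v w : W) (t : T).

Lemma hyp_focus : forall G D O R N1 u1 Nh uh, nwf pol N1 -> notNA Nh ->
  (forall st sw G' Dx Q w, lfoc G' Dx (npsub st sw N1) (wsub sw u1) Q w ->
      lfoc G' Dx (npsub st sw Nh) (wsub sw uh) Q w) ->
  act G ((N1, u1) :: D) O R -> act G ((Nh, uh) :: D) O R.
Proof.
  intros. change ((Nh, uh) :: D) with ([(Nh, uh)] ++ D). eapply CNall; [ | exact H2].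
  apply EN; auto. unfold KN; intros st sw G' Dx Q w Hi Hl. simpl.
  eapply a_perm; [ apply Permutation_cons_append | apply Permutation_refl | ].
  apply a_lf; auto. apply notNA_sub; auto.
Qed.

Lemma lolli_adm : forall G D1 D2 P N u O R, nwf pol N -> act G D1 [] (RP P u) ->
  act G ((N, u) :: D2) O R -> act G ((NLolli P N, u) :: D1 ++ D2) O R.
Proof.
  intros. change ((NLolli P N, u) :: D1 ++ D2) with (((NLolli P N, u) :: D1) ++ D2).
  eapply CNall; [ | exact H1].
  apply EN; auto. unfold KN; intros st sw G' Dx Q w Hi Hl. simpl.
  pose proof (act_sw st sw H0 Hi) as S. simpl in S.
  eapply a_perm; [ | apply Permutation_refl | ].
  2: { eapply st_top with (E := Dx ++ [(NLolli (ppsub st sw P) (npsub st sw N), wsub sw u)]); [exact S | ].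
       unfold Kont; intros st2 sw2 G'' Dz Hi2 Hr2.
       eapply a_perm; [ | apply Permutation_refl | eapply a_lf ].
       3: { cbn. eapply l_lolliL; [exact Hr2 | ]. apply (lfoc_sub st2 sw2) in Hl. eapply lfoc_weak; eauto. }
       2: { intros p ts Ee; discriminate. }
       rewrite map_app. simpl. rewrite app_assoc; apply Permutation_cons_append. }
  rewrite app_assoc. symmetry. rewrite <- Permutation_middle. eapply perm_trans; [apply Permutation_cons_append | ].
  apply Permutation_app_tail. apply Permutation_app_comm.
Qed.

Lemma goal_chain : forall G D N w, act G D [] (RN N w) -> act G D [] (RN (NNeg (PPos N)) w).
Proof.
  intros. apply a_negR. destruct (classic (exists n ts, N = NAtom n ts)) as [[n [ts E]]|E].
  - subst. eapply invR_rp; eauto.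
  - apply a_rf. + intros n ts E'; injection E'; intros; subst; apply E; eauto.
    + apply r_posR; auto.
Qed.

Definition nchain (N : NN) := exists N', N = NNeg (PPos N').

Lemma goal_peel : forall G D w A,
  (forall Cm, neg_polarization pol A Cm -> ~ nchain Cm -> act G D [] (RN Cm w)) ->
  forall Cm, neg_polarization pol A Cm -> act G D [] (RN Cm w).
Proof.
  intros G D w A H Cm. remember (nsize Cm) as k. revert Cm Heqk.
  induction k as [k IH] using (well_founded_induction Wf_nat.lt_wf). intros Cm Hk Hp.
  destruct (classic (nchain Cm)) as [[N' E]|E]; [subst | apply H; auto].
  apply goal_chain. eapply IH; [ | reflexivity | ]. simpl; lia.
  destruct Hp as [Hw He]; split; auto.
Qed.

Lemma hyp_peel : forall G D u A Cm w, nwf pol Cm ->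
  (forall Nh, neg_polarization pol A Nh -> ~ nchain Nh -> act G ((Nh, u) :: D) [] (RN Cm w)) ->
  forall Nh, neg_polarization pol A Nh -> act G ((Nh, u) :: D) [] (RN Cm w).
Proof.
  intros G D u A Cm w HC H Nh. remember (nsize Nh) as k. revert Nh Heqk.
  induction k as [k IH] using (well_founded_induction Wf_nat.lt_wf). intros Nh Hk Hp.
  destruct (classic (nchain Nh)) as [[N' E]|E]; [subst | apply H; auto].
  destruct Hp as [Hw He]. apply OD0; auto. apply a_posL. eapply IH; [ | reflexivity | split; auto]. simpl; lia.
Qed.

Lemma erase_sub :
  (forall P st sw, perase (ppsub st sw P) = psub st sw (perase P)) /\
  (forall N st sw, nerase (npsub st sw N) = psub st sw (nerase N)).
Proof. apply pn_ind; intros; simpl; rewrite ?H, ?H0; auto. Qed.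
Lemma perase_sub : forall P st sw, perase (ppsub st sw P) = psub st sw (perase P). Proof. apply erase_sub. Qed.
Lemma nerase_sub : forall N st sw, nerase (npsub st sw N) = psub st sw (nerase N). Proof. apply erase_sub. Qed.

Definition hrel (h : hyp CD Fn Pr) (h' : nh) : Prop :=
  snd h' = snd h /\ neg_polarization pol (fst h) (fst h').

Lemma negpol_sub : forall A N st sw, neg_polarization pol A N ->
  neg_polarization pol (psub st sw A) (npsub st sw N).
Proof. intros A N st sw [Hw He]; split; [apply nwf_sub; auto | rewrite nerase_sub, He; auto]. Qed.

Lemma hrel_tshift : forall (G : list (hyp CD Fn Pr)) (Gm : list nh), Forall2 hrel G Gm -> Forall2 hrel (tshift_ctx G) (ntshift_ctx Gm).
Proof.
  induction 1; simpl; constructor; auto. destruct H as [E Hp]; split; simpl; auto.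
  apply negpol_sub; auto.
Qed.
Lemma hrel_wshift : forall (G : list (hyp CD Fn Pr)) (Gm : list nh), Forall2 hrel G Gm -> Forall2 hrel (wshift_ctx G) (nwshift_ctx Gm).
Proof.
  induction 1; simpl; constructor; auto. destruct H as [E Hp]; split; simpl; auto.
  rewrite E; auto. apply negpol_sub; auto.
Qed.

Lemma Forall2_In : forall (G : list (hyp CD Fn Pr)) (Gm : list nh) A u, Forall2 hrel G Gm -> In (A, u) G ->
  exists N, In (N, u) Gm /\ neg_polarization pol A N.
Proof.
  induction 1; intros Hi; [destruct Hi | ]. destruct Hi as [E|Hi].
  - subst. destruct y as [N u']. destruct H as [E Hp]; simpl in *; subst. exists N; split; auto; left; auto.
  - destruct (IHForall2 Hi) as [N [? ?]]. exists N; split; auto. right; auto.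
Qed.


Lemma F2inv : forall (A : prop CD Fn Pr) u (D : list (hyp CD Fn Pr)) Dn, Forall2 hrel ((A, u) :: D) Dn ->
  exists Nh Dn0, Dn = (Nh, u) :: Dn0 /\ neg_polarization pol A Nh /\ Forall2 hrel D Dn0.
Proof. intros. inversion H; subst. destruct y as [Nh u']. destruct H2 as [E Hp]; simpl in *; subst. eauto. Qed.

Lemma F2cons : forall (A : prop CD Fn Pr) u N (D : list (hyp CD Fn Pr)) Dn,
  neg_polarization pol A N -> Forall2 hrel D Dn -> Forall2 hrel ((A, u) :: D) ((N, u) :: Dn).
Proof. intros; constructor; auto; split; auto. Qed.

Lemma negpol_neg : forall A P, pwf pol P -> perase P = A -> neg_polarization pol A (NNeg P).
Proof. intros; split; auto. Qed.

Ltac core X Hp Hn := let Hw := fresh "Hw" in let He := fresh "He" in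
  destruct Hp as [Hw He]; destruct X as [ | | | | | | | | ?P0]; simpl in Hw, He; try discriminate;
  try (destruct P0; simpl in Hw, He; try discriminate; try (exfalso; apply Hn; eexists; reflexivity)).

Lemma init_core : forall G a ts u w Nh Cm, weq u w ->
  neg_polarization pol (Atom a ts) Nh -> neg_polarization pol (Atom a ts) Cm ->
  act G [(Nh, u)] [] (RN Cm w).
Proof.
  intros G a ts u w Nh Cm Hw HN HC. revert Cm HC. apply goal_peel; auto.
  intros Cm HC HCn.
  assert (HwC : nwf pol Cm) by (destruct HC; auto).
  change [(Nh, u)] with ((Nh, u) :: []). revert Nh HN. apply hyp_peel; auto. intros Nh HN HNn.
  core Cm HC HCn; core Nh HN HNn.
  - injection He; injection He0; intros; subst. apply a_rp; auto. apply a_lf; [intros ? ? Ee; discriminate | ].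
    apply l_li; auto.
  - injection He; injection He0; intros; subst. congruence.
  - injection He; injection He0; intros; subst. congruence.
  - injection He; injection He0; intros; subst. apply a_negR. apply a_rf; [intros ? ? Ee; discriminate | ].
    apply r_ri; auto.
Qed.


Lemma stable_of : forall G D (A : prop CD Fn Pr) P w,
  (forall Cm, neg_polarization pol A Cm -> act G D [] (RN Cm w)) -> pwf pol P -> perase P = A ->
  act G D [] (RP P w).
Proof. intros. eapply invR_neg; [apply H; apply negpol_neg; eauto | reflexivity | reflexivity]. Qed.

Ltac gpeel Cm HC := revert Cm HC; apply goal_peel; let Hn := fresh "Hn" in intros Cm HC Hn; core Cm HC Hn.
Ltac hpeel HD HC := let Nh := fresh "Nh" in let Dn0 := fresh "Dn0" in let HN := fresh "HN" in
  let HD0 := fresh "HD0" in let Hn := fresh "Hn" in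
  destruct (F2inv HD) as [Nh [Dn0 [-> [HN HD0]]]]; clear HD;
  revert Nh HN; apply hyp_peel; [destruct HC; auto | ]; intros Nh HN Hn; core Nh HN Hn.

Lemma main_lemma : forall (G D : list (hyp CD Fn Pr)) C w, useq G D C w ->
  forall Gm Dn Cm, Forall2 hrel G Gm -> Forall2 hrel D Dn -> neg_polarization pol C Cm ->
  act Gm Dn [] (RN Cm w).
Proof.
  induction 1; intros Gm Dn Cm HG HD HC.
  - destruct (Permutation_Forall2 (Permutation_sym H) HD) as [Dn' [Hp HD']].
    eapply a_perm; [symmetry; exact Hp | apply Permutation_refl | eapply IHuseq; eauto].
  - destruct (F2inv HD) as [Nh [Dn0 [-> [HN HD0]]]]. inversion HD0; subst.
    eapply init_core; eauto.
  - destruct (Forall2_In _ _ HG H) as [N [HiN HpN]].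
    assert (Hc : act Gm [] [] (RN N u)) by (apply copy_id; [destruct HpN; auto | exact HiN]).
    change Dn with ([] ++ Dn). eapply CNall; [exact Hc | ].
    apply IHuseq; auto. apply F2cons; auto.
  - destruct (Forall2_app_inv_l _ _ HD) as [Dn1 [Dn2 [HD1 [HD2 ->]]]].
    gpeel Cm HC. injection He; intros; subst. destruct Hw.
    apply a_negR. apply st_tensor.
    + eapply stable_of; [intros; apply IHuseq1; eauto | auto | reflexivity].
    + eapply stable_of; [intros; apply IHuseq2; eauto | auto | reflexivity].
  - hpeel HD HC. injection He; intros; subst. destruct Hw as [Hw1 Hw2].
    apply OD0; [simpl; tauto | destruct HC; auto | ]. apply a_tensorL.
    apply DO; auto. apply DO; auto. eapply a_perm; [apply perm_swap | apply Permutation_refl | ].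
    apply IHuseq; auto. apply F2cons; [apply negpol_neg; auto | ]. apply F2cons; [apply negpol_neg; auto | auto].
  - inversion HD; subst. gpeel Cm HC. apply a_negR. apply a_rf; [intros ? ? Ee; discriminate | apply r_oneR].
  - hpeel HD HC. apply OD0; [simpl; tauto | destruct HC; auto | ]. apply a_oneL. apply IHuseq; auto.
  - gpeel Cm HC. injection He; intros; subst. destruct Hw as [Hw1 Hw2].
    apply a_lolliR. apply DO; auto. apply IHuseq; auto. apply F2cons; [apply negpol_neg; auto | auto]. split; auto.
  - hpeel HD HC. injection He; intros; subst. destruct Hw as [Hw1 Hw2].
    destruct (Forall2_app_inv_l _ _ HD0) as [Dn1 [Dn2 [HD1 [HD2 ->]]]].
    apply lolli_adm; auto.
    + eapply stable_of; [intros; apply IHuseq1; eauto | auto | reflexivity].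
    + apply IHuseq2; auto. apply F2cons; auto. split; auto.
  - gpeel Cm HC. injection He; intros; subst. destruct Hw as [Hw1 Hw2].
    apply a_withR; [apply IHuseq1 | apply IHuseq2]; auto; split; auto.
  - hpeel HD HC. injection He; intros; subst. destruct Hw as [Hw1 Hw2].
    eapply hyp_focus with (N1 := Nh1) (u1 := u); auto; [intros ? ? Ee; discriminate | | ].
    + intros. cbn. apply l_withL1; auto.
    + apply IHuseq; auto. apply F2cons; auto. split; auto.
  - hpeel HD HC. injection He; intros; subst. destruct Hw as [Hw1 Hw2].
    eapply hyp_focus with (N1 := Nh2) (u1 := u); auto; [intros ? ? Ee; discriminate | | ].
    + intros. cbn. apply l_withL2; auto.
    + apply IHuseq; auto. apply F2cons; auto. split; auto.
  - gpeel Cm HC. apply a_topR.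
  - gpeel Cm HC. injection He; intros; subst. destruct Hw as [Hw1 Hw2].
    apply a_negR. apply st_unary with (P := P0_1) (u := w).
    + eapply stable_of; [intros; apply IHuseq; eauto | auto | reflexivity].
    + intros. cbn. apply r_plusR1; auto.
  - gpeel Cm HC. injection He; intros; subst. destruct Hw as [Hw1 Hw2].
    apply a_negR. apply st_unary with (P := P0_2) (u := w).
    + eapply stable_of; [intros; apply IHuseq; eauto | auto | reflexivity].
    + intros. cbn. apply r_plusR2; auto.
  - hpeel HD HC. injection He; intros; subst. destruct Hw as [Hw1 Hw2].
    apply OD0; [simpl; tauto | destruct HC; auto | ]. apply a_plusL; apply DO; auto;
    [apply IHuseq1 | apply IHuseq2]; auto; apply F2cons; auto; apply negpol_neg; auto.
  - hpeel HD HC. apply OD0; [simpl; tauto | destruct HC; auto | ]. apply a_zeroL.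
  - inversion HD; subst. gpeel Cm HC. injection He; intros; subst.
    apply a_negR. apply a_rf; [intros ? ? Ee; discriminate | ]. apply r_bangR. apply IHuseq; auto. split; auto.
  - hpeel HD HC. injection He; intros; subst.
    apply OD0; [simpl; tauto | destruct HC; auto | ]. apply a_bangL. apply IHuseq; auto.
    apply F2cons; auto. split; auto.
  - gpeel Cm HC. injection He; intros; subst. apply a_allTR.
    apply IHuseq; [apply hrel_tshift; auto | apply hrel_tshift; auto | split; auto].
  - gpeel Cm HC. injection He; intros; subst. apply a_allWR.
    apply IHuseq; [apply hrel_wshift; auto | apply hrel_wshift; auto | split; auto].
  - hpeel HD HC. injection He; intros; subst.
    eapply hyp_focus with (N1 := ntinst t Nh) (u1 := u); [apply nwf_sub; auto | intros ? ? Ee; discriminate | | ].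
    + intros st sw G' Dx Q w0 Hl. cbn. apply l_allTL with (t := tsub st t). rewrite <- np_tinst. exact Hl.
    + apply IHuseq; auto. apply F2cons; auto. apply negpol_sub; split; auto.
  - hpeel HD HC. injection He; intros; subst.
    eapply hyp_focus with (N1 := nwinst v Nh) (u1 := u); [apply nwf_sub; auto | intros ? ? Ee; discriminate | | ].
    + intros st sw G' Dx Q w0 Hl. cbn. apply l_allWL with (v := wsub sw v). rewrite <- np_winst. exact Hl.
    + apply IHuseq; auto. apply F2cons; auto. apply negpol_sub; split; auto.
  - gpeel Cm HC. injection He; intros; subst.
    apply a_negR. apply st_unary with (P := ptinst t P0) (u := w).
    + eapply stable_of; [intros; apply IHuseq; eauto | apply pwf_sub; auto | apply perase_sub].
    + intros st sw G' Dz Hr. cbn. apply r_exTR with (t := tsub st t). rewrite <- pp_tinst. exact Hr.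
  - gpeel Cm HC. injection He; intros; subst.
    apply a_negR. apply st_unary with (P := pwinst v P0) (u := w).
    + eapply stable_of; [intros; apply IHuseq; eauto | apply pwf_sub; auto | apply perase_sub].
    + intros st sw G' Dz Hr. cbn. apply r_exWR with (v := wsub sw v). rewrite <- pp_winst. exact Hr.
  - hpeel HD HC. injection He; intros; subst.
    apply OD0; [simpl; tauto | destruct HC; auto | ]. apply a_exTL. simpl.
    apply DO; auto. apply IHuseq; [apply hrel_tshift; auto | | apply negpol_sub; auto].
    apply F2cons; [apply negpol_neg; auto | apply hrel_tshift; auto].
  - hpeel HD HC. injection He; intros; subst.
    apply OD0; [simpl; tauto | destruct HC; auto | ]. apply a_exWL. simpl.
    apply DO; auto. apply IHuseq; [apply hrel_wshift; auto | | apply negpol_sub; auto].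
    apply F2cons; [apply negpol_neg; auto | apply hrel_wshift; auto].
  - gpeel Cm HC.
    + injection He; intros; subst. apply a_atRA. apply IHuseq; auto. split; auto.
    + injection He; intros; subst. apply a_negR. apply st_unary with (P := P0) (u := u).
      * eapply stable_of; [intros; apply IHuseq; eauto | auto | reflexivity].
      * intros st sw G' Dz Hr. cbn. apply r_atRF. exact Hr.
  - hpeel HD HC.
    + injection He; intros; subst.
      eapply hyp_focus with (N1 := Nh) (u1 := u); [auto | intros ? ? Ee; discriminate | | ].
      * intros st sw G' Dx Q w0 Hl. cbn. apply l_atLF. exact Hl.
      * apply IHuseq; auto. apply F2cons; auto. split; auto.
    + injection He; intros; subst.
      apply OD0; [simpl; tauto | destruct HC; auto | ]. apply a_atLA.
      apply DO; auto. apply IHuseq; auto. apply F2cons; auto. apply negpol_neg; auto.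
  - gpeel Cm HC.
    + injection He; intros; subst. apply a_downRA. apply IHuseq; auto. apply negpol_sub; split; auto.
    + injection He; intros; subst. apply a_negR. apply st_unary with (P := pwinst w P0) (u := w).
      * eapply stable_of; [intros; apply IHuseq; eauto | apply pwf_sub; auto | apply perase_sub].
      * intros st sw G' Dz Hr. cbn. apply r_downRF. rewrite <- pp_winst. exact Hr.
  - hpeel HD HC.
    + injection He; intros; subst.
      eapply hyp_focus with (N1 := nwinst v Nh) (u1 := v); [apply nwf_sub; auto | intros ? ? Ee; discriminate | | ].
      * intros st sw G' Dx Q w0 Hl. cbn. apply l_downLF. rewrite <- np_winst. exact Hl.
      * apply IHuseq; auto. apply F2cons; auto. apply negpol_sub; split; auto.
    + injection He; intros; subst.
      apply OD0; [simpl; tauto | destruct HC; auto | ]. apply a_downLA.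
      apply DO; [apply pwf_sub; auto | ]. apply IHuseq; auto. apply F2cons; auto.
      apply negpol_neg; [apply pwf_sub; auto | apply perase_sub].
Qed.

End Main.

Section Final.
Context {CD : constraint_domain} {Fn Pr : Type}.
Variable pol : Pr -> bool.

Lemma DO_list : forall (Dp : list (phyp CD Fn Pr)) G D O R,
  Forall (fun h => pwf pol (fst h)) Dp ->
  act pol G (map (fun h => (NNeg (fst h), snd h)) Dp ++ D) O R -> act pol G D (Dp ++ O) R.
Proof.
  induction Dp as [|[P u] Dp IH]; intros; simpl in *; auto.
  inversion H; subst. simpl in H3. apply DO in H0; auto.
  eapply a_perm; [apply Permutation_refl | | apply IH; eauto]. simpl. apply Permutation_sym, Permutation_middle.
Qed.

Lemma bang_list : forall (Gm : list (nhyp CD Fn Pr)) G O R,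
  act pol (Gm ++ G) [] O R -> act pol G [] (map (fun h => (PBang (fst h), snd h)) Gm ++ O) R.
Proof.
  induction Gm as [|[N u] Gm IH]; intros; simpl in *; auto.
  apply a_bangL. apply IH. eapply act_weak; eauto.
  intros z [E|Hz]; [subst; apply in_or_app; right; left; auto | ].
  apply in_app_or in Hz; destruct Hz; apply in_or_app; [left; auto | right; right; auto].
Qed.

End Final.

Unset Implicit Arguments.

Theorem mainTheorem8 (CD : constraint_domain) (Fn Pr : Type) (pol : Pr -> bool)
  (G D : list (hyp CD Fn Pr)) (C : prop CD Fn Pr) (w : wexp CD)
  (Gm : list (nhyp CD Fn Pr)) (Dp : list (phyp CD Fn Pr)) (Cm : nprop CD Fn Pr) :
  useq G D C w ->
  Forall2 (fun (h : hyp CD Fn Pr) (h' : nhyp CD Fn Pr) =>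
             snd h' = snd h /\ neg_polarization pol (fst h) (fst h')) G Gm ->
  Forall2 (fun (h : hyp CD Fn Pr) (h' : phyp CD Fn Pr) =>
             snd h' = snd h /\ pos_polarization pol (fst h) (fst h')) D Dp ->
  neg_polarization pol C Cm ->
  act pol [] [] (map (fun h : nhyp CD Fn Pr => (PBang (fst h), snd h)) Gm ++ Dp)
      (RN Cm w).
Proof.
  intros HU HG HD HC.
  assert (HD' : Forall2 (hrel pol) D (map (fun h => (NNeg (fst h), snd h)) Dp)).
  { clear -HD. induction HD; simpl; constructor; auto.
    all: try (destruct H as [E [Hw He]]; split; simpl; auto; split; auto). }
  assert (HF : Forall (fun h => pwf pol (fst h)) Dp).
  { clear -HD. induction HD; constructor; auto. destruct H as [E [Hw He]]; auto. }
  pose proof (main_lemma HU HG HD' HC) as H.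
  rewrite <- (app_nil_r (map _ Dp)) in H. apply DO_list in H; auto.
  rewrite app_nil_r in H. apply bang_list. rewrite app_nil_r. exact H.
Qed.
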